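(* Consider the delay differential system \[ \begin{aligned} \dot S_h(t)&=\beta_h-C_{vh}\frac{I_v(t)}{N_v(t)}S_h(t)-\mu_hS_h(t),\\ \dot I_h(t)&=C_{vh}\frac{I_v(t-\tau)}{N_v(t-\tau)}S_h(t-\tau)-\mu_hI_h(t),\\ \dot S_v(t)&=\beta_v-C_{hv}I_h(t)S_v(t)-\mu_vS_v(t),\\ \dot I_v(t)&=C_{hv}I_h(t)S_v(t)-\mu_vI_v(t), \end{aligned} \] where $N_v(t)=S_v(t)+I_v(t)$, the parameters $\beta_h,\beta_v,\mu_h,\mu_v,C_{vh},C_{hv}$ are positive and $\tau\ge 0$. For every initial function $\varphi\in C_+$, the solution $x(t)=(S_h(t),I_h(t),S_v(t),I_v(t))^T$ of this system through $\varphi$ exists on $[0,\infty)$, is unique, nonnegative, and ultimately bounded on $[0,\infty)$.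
   Context: $C=C([-\tau,0],\mathbb{R}_+^4)$ with the sup-norm, $\mathbb{R}_+=[0,\infty)$, and the phase space is $C_+=\{\varphi=(\varphi_1,\varphi_2,\varphi_3,\varphi_4)^T\in C:\ \varphi_3(\theta)+\varphi_4(\theta)>0 \text{ for all }\theta\in[-\tau,0]\}$. The solution through $\varphi$ satisfies $x(\theta)=\varphi(\theta)$ for $\theta\in[-\tau,0]$. *)

(* Defs.v *)
From Stdlib Require Import Reals.
Open Scope R_scope.

Record traj : Type := mkTraj {
  Sh : R -> R; Ih : R -> R; Sv : R -> R; Iv : R -> R }.

Definition cont_on_interval (a b : R) (f : R -> R) : Prop :=
  forall t, a <= t <= b -> forall eps, 0 < eps ->
    exists delta, 0 < delta /\
      forall s, a <= s <= b -> Rabs (s - t) < delta -> Rabs (f s - f t) < eps.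

Definition cont_on_from (a : R) (f : R -> R) : Prop :=
  forall t, a <= t -> forall eps, 0 < eps ->
    exists delta, 0 < delta /\
      forall s, a <= s -> Rabs (s - t) < delta -> Rabs (f s - f t) < eps.

(* phi belongs to C_+ : continuous on [-tau,0] with values in R_+^4 and
   phi_3 + phi_4 > 0 on [-tau,0] (values outside [-tau,0] are irrelevant). *)
Definition in_Cplus (tau : R) (phi : traj) : Prop :=
  cont_on_interval (- tau) 0 (Sh phi) /\ cont_on_interval (- tau) 0 (Ih phi) /\
  cont_on_interval (- tau) 0 (Sv phi) /\ cont_on_interval (- tau) 0 (Iv phi) /\
  (forall th, - tau <= th <= 0 ->
     0 <= Sh phi th /\ 0 <= Ih phi th /\ 0 <= Sv phi th /\ 0 <= Iv phi th /\
     0 < Sv phi th + Iv phi th).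

(* x is a solution on [0, +oo) of the delay system through phi:
   x = phi on [-tau, 0], x continuous on [-tau, +oo), N_v = S_v + I_v never
   vanishes on [-tau, +oo) (domain of the vector field), and the equations hold
   for every t > 0. *)
Definition is_solution (bh bv mh mv Cvh Chv tau : R) (phi x : traj) : Prop :=
  (forall th, - tau <= th <= 0 ->
     Sh x th = Sh phi th /\ Ih x th = Ih phi th /\
     Sv x th = Sv phi th /\ Iv x th = Iv phi th) /\
  cont_on_from (- tau) (Sh x) /\ cont_on_from (- tau) (Ih x) /\
  cont_on_from (- tau) (Sv x) /\ cont_on_from (- tau) (Iv x) /\
  (forall t, - tau <= t -> Sv x t + Iv x t <> 0) /\
  (forall t, 0 < t ->
     derivable_pt_lim (Sh x) t
       (bh - Cvh * (Iv x t / (Sv x t + Iv x t)) * Sh x t - mh * Sh x t) /\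
     derivable_pt_lim (Ih x) t
       (Cvh * (Iv x (t - tau) / (Sv x (t - tau) + Iv x (t - tau))) * Sh x (t - tau)
        - mh * Ih x t) /\
     derivable_pt_lim (Sv x) t
       (bv - Chv * Ih x t * Sv x t - mv * Sv x t) /\
     derivable_pt_lim (Iv x) t
       (Chv * Ih x t * Sv x t - mv * Iv x t)).

(* Main.v *)
Require Import Defs.
From Stdlib Require Import Reals Lra Lia ZArith.
From Coquelicot Require Import Coquelicot.
Open Scope R_scope.

Lemma cp_plus f g x : continuity_pt f x -> continuity_pt g x -> continuity_pt (fun t => f t + g t) x.
Proof. intros; now apply continuity_pt_plus. Qed.
Lemma cp_minus f g x : continuity_pt f x -> continuity_pt g x -> continuity_pt (fun t => f t - g t) x.
Proof. intros; now apply continuity_pt_minus. Qed.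
Lemma cp_mult f g x : continuity_pt f x -> continuity_pt g x -> continuity_pt (fun t => f t * g t) x.
Proof. intros; now apply continuity_pt_mult. Qed.
Lemma cp_div f g x : continuity_pt f x -> continuity_pt g x -> g x <> 0 -> continuity_pt (fun t => f t / g t) x.
Proof. intros; now apply continuity_pt_div. Qed.
Lemma cp_const c x : continuity_pt (fun _ => c) x.
Proof. apply continuity_pt_const; intros a b; reflexivity. Qed.
Lemma cp_id x : continuity_pt (fun t => t) x.
Proof. apply derivable_continuous_pt, derivable_pt_id. Qed.
Lemma cp_comp f g x : continuity_pt f x -> continuity_pt g (f x) -> continuity_pt (fun t => g (f t)) x.
Proof. intros; now apply (continuity_pt_comp f g). Qed.
Lemma cp_exp x : continuity_pt exp x.
Proof. apply derivable_continuous_pt, derivable_pt_exp. Qed.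
Lemma cp_abs x : continuity_pt Rabs x.
Proof. apply Rcontinuity_abs. Qed.

Lemma lip_cont (g : R -> R) : (forall s t, Rabs (g s - g t) <= Rabs (s - t)) -> forall z, continuity_pt g z.
Proof.
  intros H z eps He. exists eps; split; [lra|]. intros x [_ Hx].
  simpl in *. unfold R_dist in *. eapply Rle_lt_trans; [apply H| exact Hx].
Qed.

Lemma Rmax_lip a s t : Rabs (Rmax a s - Rmax a t) <= Rabs (s - t).
Proof. unfold Rmax; destruct (Rle_dec a s), (Rle_dec a t); unfold Rabs; repeat destruct Rcase_abs; lra. Qed.
Lemma Rmin_lip a s t : Rabs (Rmin a s - Rmin a t) <= Rabs (s - t).
Proof. unfold Rmin; destruct (Rle_dec a s), (Rle_dec a t); unfold Rabs; repeat destruct Rcase_abs; lra. Qed.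

Lemma cp_Rmax a x : continuity_pt (fun t => Rmax a t) x.
Proof. apply lip_cont, Rmax_lip. Qed.
Lemma cp_Rmin a x : continuity_pt (fun t => Rmin a t) x.
Proof. apply lip_cont, Rmin_lip. Qed.

Lemma cp_opp f x : continuity_pt f x -> continuity_pt (fun t => - f t) x.
Proof. intros; now apply continuity_pt_opp. Qed.

Ltac cont := repeat lazymatch goal with
  | |- continuity_pt (fun _ => ?c) _ => apply cp_const
  | |- continuity_pt (fun t => t) _ => apply cp_id
  | |- continuity_pt (fun t => _ - _) _ => apply cp_minus
  | |- continuity_pt (fun t => _ + _) _ => apply cp_plus
  | |- continuity_pt (fun t => _ * _) _ => apply cp_mult
  | |- continuity_pt (fun t => - _) _ => apply cp_opp
  | |- continuity_pt (fun t => Rabs _) _ => apply (cp_comp _ Rabs); [|apply cp_abs]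
  | |- continuity_pt (fun t => exp _) _ => apply (cp_comp _ exp); [|apply cp_exp]
  | |- continuity_pt (fun t => Rmax ?a t) _ => apply cp_Rmax
  | |- continuity_pt (fun t => Rmin ?a t) _ => apply cp_Rmin
  | |- continuity_pt (Rmult ?c) _ => apply (cp_mult (fun _ => c) (fun t => t))
  | |- continuity_pt (Rplus ?c) _ => apply (cp_plus (fun _ => c) (fun t => t))
  end.

Lemma ext_from_cont a f : cont_on_from a f -> forall z, continuity_pt (fun t => f (Rmax a t)) z.
Proof.
  intros Hf z eps He.
  destruct (Hf (Rmax a z) (Rmax_l a z) eps He) as [d [Hd Hd']].
  exists d; split; [lra|]. intros x [_ Hx]. simpl in *. unfold R_dist in *.
  apply Hd'. apply Rmax_l. eapply Rle_lt_trans; [apply Rmax_lip|exact Hx].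
Qed.

Lemma ext_int_cont a b f : a <= b -> cont_on_interval a b f ->
  forall z, continuity_pt (fun t => f (Rmax a (Rmin b t))) z.
Proof.
  intros Hab Hf z eps He.
  assert (Hz : a <= Rmax a (Rmin b z) <= b).
  { split; [apply Rmax_l|]. apply Rmax_lub; [lra|apply Rmin_l]. }
  destruct (Hf _ Hz eps He) as [d [Hd Hd']].
  exists d; split; [lra|]. intros x [_ Hx]. simpl in *. unfold R_dist in *.
  apply Hd'.
  { split; [apply Rmax_l|]. apply Rmax_lub; [lra|apply Rmin_l]. }
  eapply Rle_lt_trans; [apply Rmax_lip|]. eapply Rle_lt_trans; [apply Rmin_lip|exact Hx].
Qed.

Lemma cont_from_of_pt a f : (forall z, continuity_pt f z) -> cont_on_from a f.
Proof.
  intros H t _ eps He. destruct (H t eps He) as [d [Hd Hd']].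
  exists d; split; [lra|]. intros s _ Hs.
  destruct (Req_dec s t) as [->|Hne]. { rewrite Rminus_eq_0, Rabs_R0; lra. }
  apply (Hd' s). split; [split; [exact I|auto]|exact Hs].
Qed.

Lemma cont_from_mono a b f : a <= b -> cont_on_from a f -> cont_on_from b f.
Proof.
  intros Hab H t Ht eps He. destruct (H t ltac:(lra) eps He) as [d [Hd Hd']].
  exists d; split; [lra|]. intros s Hs Hs'. apply Hd'; lra.
Qed.

Lemma mvt_from (f df : R -> R) a s t : cont_on_from a f ->
  (forall x, a < x -> derivable_pt_lim f x (df x)) -> a <= s < t ->
  exists xi, s < xi < t /\ f t - f s = df xi * (t - s).
Proof.
  intros Hc Hd Hst.
  set (g := fun x => f (Rmax a x)).
  assert (Hg : forall x, a < x -> derivable_pt_lim g x (df x)).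
  { intros x Hx. apply is_derive_Reals. assert (Hd' := Hd x Hx). apply is_derive_Reals in Hd'.
    apply (is_derive_ext_loc f). 2: exact Hd'.
    exists (mkposreal (x - a) ltac:(lra)). intros y Hy.
    unfold g. rewrite Rmax_right; [reflexivity|].
    unfold ball in Hy; simpl in Hy; unfold AbsRing_ball, abs, minus, plus, opp in Hy; simpl in Hy.
    unfold Rabs in Hy; destruct Rcase_abs in Hy; lra. }
  assert (pr1 : forall c, s < c < t -> derivable_pt g c).
  { intros c Hc'. exists (df c). apply Hg. lra. }
  assert (pr2 : forall c, s < c < t -> derivable_pt id c).
  { intros c _. exists 1. apply derivable_pt_lim_id. }
  destruct (MVT g id s t pr1 pr2 (proj2 Hst)) as [c [P HP]].
  - intros c _. apply ext_from_cont. exact Hc.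
  - intros c _. apply derivable_continuous_pt, derivable_pt_id.
  - exists c; split; [exact P|].
    assert (E1 : derive_pt g c (pr1 c P) = df c).
    { apply derive_pt_eq_0. apply Hg. lra. }
    assert (E2 : derive_pt id c (pr2 c P) = 1).
    { apply derive_pt_eq_0. apply derivable_pt_lim_id. }
    rewrite E1, E2 in HP. unfold id, g in HP.
    rewrite !Rmax_right in HP by lra. lra.
Qed.

Lemma mono_from (f df : R -> R) a s t : cont_on_from a f ->
  (forall x, a < x -> derivable_pt_lim f x (df x)) ->
  (forall x, s < x < t -> df x <= 0) -> a <= s <= t -> f t <= f s.
Proof.
  intros Hc Hd Hneg Hst. destruct (Req_dec s t) as [->|Hne]; [lra|].
  destruct (mvt_from f df a s t Hc Hd ltac:(lra)) as [xi [Hxi E]].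
  assert (df xi <= 0) by (apply Hneg; lra).
  assert (df xi * (t - s) <= 0) by (apply Rmult_le_0_r; lra). lra.
Qed.

Lemma barrier_low (f df : R -> R) a c t : cont_on_from a f ->
  (forall x, a < x -> derivable_pt_lim f x (df x)) ->
  c <= f a -> (forall x, a < x -> f x < c -> 0 <= df x) -> a <= t -> c <= f t.
Proof.
  intros Hc Hd Ha Hder Hat.
  destruct (Rle_dec c (f t)) as [ok|Hlt]; [exact ok|exfalso]. apply Rnot_le_lt in Hlt.
  set (E := fun s => a <= s <= t /\ c <= f s).
  assert (HbE : bound E). { exists t. intros s [Hs _]. lra. }
  assert (HexE : exists s, E s). { exists a. split; [lra|exact Ha]. }
  destruct (completeness E HbE HexE) as [m [Hub Hlub]].
  assert (Ham : a <= m). { apply Hub. split; [lra|exact Ha]. }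
  assert (Hmt : m <= t). { apply Hlub. intros s [Hs _]. lra. }
  assert (Hfm : c <= f m).
  { destruct (Rle_dec c (f m)) as [ok|Hn]; [exact ok|exfalso]. apply Rnot_le_lt in Hn.
    destruct (Hc m Ham (c - f m) ltac:(lra)) as [d [Hd0 Hd1]].
    assert (m <= Rmax a (m - d/2)).
    { apply Hlub. intros s [[Hs1 Hs2] Hs3].
      destruct (Rle_dec s (Rmax a (m - d/2))) as [ok|Hn2]; [exact ok|exfalso].
      apply Rnot_le_lt in Hn2.
      assert (s <= m) by (apply Hub; split; [lra|exact Hs3]).
      assert (m - d/2 < s) by (eapply Rle_lt_trans; [apply Rmax_r|exact Hn2]).
      specialize (Hd1 s ltac:(lra)). assert (Rabs (s - m) < d).
      { unfold Rabs; destruct Rcase_abs; lra. }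
      specialize (Hd1 H1). unfold Rabs in Hd1; destruct Rcase_abs in Hd1; lra. }
    unfold Rmax in H; destruct Rle_dec in H.
    - lra.
    - assert (m = a) by lra. subst m. lra. }
  assert (Hmlt : m < t). { destruct (Req_dec m t); [subst; lra|lra]. }
  destruct (mvt_from f df a m t Hc Hd ltac:(lra)) as [xi [Hxi Eq]].
  assert (Hfx : f xi < c).
  { destruct (Rlt_dec (f xi) c) as [ok|Hn]; [exact ok|exfalso]. apply Rnot_lt_le in Hn.
    assert (xi <= m) by (apply Hub; split; [lra|exact Hn]). lra. }
  specialize (Hder xi ltac:(lra) Hfx).
  assert (0 <= df xi * (t - m)) by (apply Rmult_le_pos; lra). lra.
Qed.

Lemma barrier_up (f df : R -> R) a c t : cont_on_from a f ->
  (forall x, a < x -> derivable_pt_lim f x (df x)) ->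
  f a <= c -> (forall x, a < x -> c < f x -> df x <= 0) -> a <= t -> f t <= c.
Proof.
  intros Hc Hd Ha Hder Hat.
  assert (- c <= - f t); [|lra].
  apply (barrier_low (fun x => - f x) (fun x => - df x) a (-c) t).
  - intros s Hs eps He. destruct (Hc s Hs eps He) as [d [Hd0 Hd1]]. exists d; split; [lra|].
    intros r Hr Hr'. specialize (Hd1 r Hr Hr'). rewrite <- Rabs_Ropp. replace (- (- f r - - f s)) with (f r - f s) by ring. exact Hd1.
  - intros x Hx. apply derivable_pt_lim_opp. apply Hd. exact Hx.
  - lra.
  - intros x Hx Hlt. specialize (Hder x Hx ltac:(lra)). lra.
  - exact Hat.
Qed.

Lemma bounded_from a f : cont_on_from a f -> forall T, exists M, 0 <= M /\ forall t, a <= t <= T -> Rabs (f t) <= M.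
Proof.
  intros Hc T. destruct (Rle_dec a T) as [HaT|HaT].
  - assert (Hcp : forall c, a <= c <= T -> continuity_pt (fun t => Rabs (f (Rmax a t))) c).
    { intros c _. apply (cp_comp _ Rabs); [apply ext_from_cont; exact Hc|apply cp_abs]. }
    destruct (continuity_ab_maj _ a T HaT Hcp) as [Mx [HM HMx]].
    exists (Rabs (f (Rmax a Mx))). split; [apply Rabs_pos|]. intros t Ht.
    specialize (HM t Ht). rewrite Rmax_right in HM by lra. exact HM.
  - exists 0. split; [lra|]. intros t Ht. lra.
Qed.

Lemma nat_above r : exists n : nat, r < INR n.
Proof.
  destruct (archimed r) as [H1 H2].
  destruct (Z_lt_le_dec 0 (up r)) as [Hp|Hn].
  - exists (Z.to_nat (up r)). rewrite INR_IZR_INZ, Z2Nat.id by lia. lra.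
  - exists 0%nat. simpl. apply IZR_le in Hn. lra.
Qed.

Lemma cont_from_of_ext a f : (forall z, continuity_pt (fun t => f (Rmax a t)) z) -> cont_on_from a f.
Proof.
  intros H. intros t Ht eps He. destruct (cont_from_of_pt a _ H t Ht eps He) as [d [Hd Hd']].
  exists d; split; [exact Hd|]. intros s Hs Hs'. specialize (Hd' s Hs Hs').
  rewrite !Rmax_right in Hd' by lra. exact Hd'.
Qed.

Lemma prod_lip a b c d M : Rabs a <= M -> Rabs d <= M ->
  Rabs (a * b - c * d) <= M * (Rabs (b - d) + Rabs (a - c)).
Proof.
  intros Ha Hd. replace (a * b - c * d) with (a * (b - d) + d * (a - c)) by ring.
  eapply Rle_trans; [apply Rabs_triang|]. rewrite !Rabs_mult.
  assert (0 <= Rabs (b - d)) by apply Rabs_pos. assert (0 <= Rabs (a - c)) by apply Rabs_pos.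
  assert (Rabs a * Rabs (b - d) <= M * Rabs (b - d)) by (apply Rmult_le_compat_r; lra).
  assert (Rabs d * Rabs (a - c) <= M * Rabs (a - c)) by (apply Rmult_le_compat_r; lra).
  lra.
Qed.

Section Sys.
Variables bh bv mh mv Cvh Chv tau : R.
Hypotheses (Hbh : 0 < bh) (Hbv : 0 < bv) (Hmh : 0 < mh) (Hmv : 0 < mv)
  (HCvh : 0 < Cvh) (HChv : 0 < Chv) (Htau : 0 <= tau).
Variable phi : traj.
Hypothesis Hphi : in_Cplus tau phi.

Definition N0 := Sv phi 0 + Iv phi 0.
Definition nf t := bv / mv + (N0 - bv / mv) * exp (- mv * t).

Lemma N0_pos : 0 < N0.
Proof. destruct Hphi as (_&_&_&_&H). apply (H 0). lra. Qed.

Lemma nf_deriv t : derivable_pt_lim nf t (bv - mv * nf t).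
Proof.
  apply is_derive_Reals. unfold nf. auto_derive; [exact I|]. field. lra.
Qed.

Lemma nf_cont t : continuity_pt nf t.
Proof. apply derivable_continuous_pt. exists (bv - mv * nf t). apply nf_deriv. Qed.

Lemma nf_0 : nf 0 = N0.
Proof. unfold nf. rewrite Rmult_0_r, exp_0. field. lra. Qed.

Lemma nf_bounds t : 0 <= t -> Rmin N0 (bv / mv) <= nf t <= Rmax N0 (bv / mv).
Proof.
  intros Ht. unfold nf. assert (He : 0 < exp (- mv * t)) by apply exp_pos.
  assert (He1 : exp (- mv * t) <= 1).
  { rewrite <- exp_0. destruct (Req_dec t 0) as [->|]. { rewrite Rmult_0_r; lra. }
    left. apply exp_increasing. nra. }
  unfold Rmin, Rmax; destruct Rle_dec; split; nra.
Qed.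

Lemma nf_pos t : 0 <= t -> 0 < nf t.
Proof.
  intros Ht. assert (H := nf_bounds t Ht). assert (0 < Rmin N0 (bv / mv)).
  { unfold Rmin; destruct Rle_dec. apply N0_pos. apply Rdiv_lt_0_compat; lra. }
  lra.
Qed.

Definition G1 (x : traj) s := bh - Cvh * (Iv x s / (Sv x s + Iv x s)) * Sh x s - mh * Sh x s.
Definition G2 (x : traj) s := Cvh * (Iv x (s - tau) / (Sv x (s - tau) + Iv x (s - tau))) * Sh x (s - tau)
        - mh * Ih x s.
Definition G3 (x : traj) s := bv - Chv * Ih x s * Sv x s - mv * Sv x s.
Definition G4 (x : traj) s := Chv * Ih x s * Sv x s - mv * Iv x s.

Notation sol := (is_solution bh bv mh mv Cvh Chv tau phi).

Lemma sol_init x : sol x -> forall th, - tau <= th <= 0 ->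
     Sh x th = Sh phi th /\ Ih x th = Ih phi th /\ Sv x th = Sv phi th /\ Iv x th = Iv phi th.
Proof. intros H; apply H. Qed.

Lemma sol_Nv x : sol x -> forall t, 0 <= t -> Sv x t + Iv x t = nf t.
Proof.
  intros Hx t Ht.
  destruct Hx as (Hi & _ & _ & HcSv & HcIv & _ & Hd).
  set (w := fun t => Sv x t + Iv x t - nf t).
  assert (Hcw : cont_on_from 0 w).
  { apply cont_from_of_ext. intros z. unfold w.
    apply cp_minus; [apply cp_plus|].
    - apply ext_from_cont. eapply cont_from_mono; [|exact HcSv]; lra.
    - apply ext_from_cont. eapply cont_from_mono; [|exact HcIv]; lra.
    - apply (cp_comp _ nf); [apply cp_Rmax|apply nf_cont]. }
  assert (Hdw : forall s, 0 < s -> derivable_pt_lim w s (- mv * w s)).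
  { intros s Hs. destruct (Hd s Hs) as (_&_&H3&H4).
    assert (H := derivable_pt_lim_minus _ _ _ _ _ (derivable_pt_lim_plus _ _ _ _ _ H3 H4) (nf_deriv s)).
    replace (- mv * w s) with
      (bv - Chv * Ih x s * Sv x s - mv * Sv x s + (Chv * Ih x s * Sv x s - mv * Iv x s) - (bv - mv * nf s))
      by (unfold w; ring).
    exact H. }
  assert (Hw0 : w 0 = 0).
  { unfold w. destruct (Hi 0 ltac:(lra)) as (_&_&->&->). rewrite nf_0. unfold N0. ring. }
  assert (0 <= w t).
  { apply (barrier_low w (fun s => - mv * w s) 0 0 t Hcw Hdw); [lra| |exact Ht].
    intros s _ Hs. nra. }
  assert (w t <= 0).
  { apply (barrier_up w (fun s => - mv * w s) 0 0 t Hcw Hdw); [lra| |exact Ht].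
    intros s _ Hs. nra. }
  unfold w in *. lra.
Qed.

Lemma Nphi_lower : exists nl, 0 < nl /\ (forall th, - tau <= th <= 0 -> nl <= Sv phi th + Iv phi th)
   /\ forall t, 0 <= t -> nl <= nf t.
Proof.
  destruct Hphi as (_&_&C3&C4&Hp).
  assert (Hcp : forall c, - tau <= c <= 0 ->
     continuity_pt (fun t => Sv phi (Rmax (- tau) (Rmin 0 t)) + Iv phi (Rmax (- tau) (Rmin 0 t))) c).
  { intros c _. apply cp_plus; apply ext_int_cont; auto; lra. }
  destruct (continuity_ab_min _ (- tau) 0 ltac:(lra) Hcp) as [m [Hm Hmr]].
  assert (Em : Rmax (- tau) (Rmin 0 m) = m).
  { rewrite Rmin_right by lra. rewrite Rmax_right by lra. reflexivity. }
  rewrite Em in Hm.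
  exists (Rmin (Sv phi m + Iv phi m) (Rmin N0 (bv / mv))). split; [|split].
  - assert (0 < Sv phi m + Iv phi m) by (apply Hp; lra).
    assert (0 < Rmin N0 (bv / mv)).
    { unfold Rmin; destruct Rle_dec. apply N0_pos. apply Rdiv_lt_0_compat; lra. }
    unfold Rmin at 1; destruct Rle_dec; lra.
  - intros th Hth. specialize (Hm th Hth).
    assert (E : Rmax (- tau) (Rmin 0 th) = th).
    { rewrite Rmin_right by lra. rewrite Rmax_right by lra. reflexivity. }
    rewrite E in Hm. eapply Rle_trans; [apply Rmin_l|exact Hm].
  - intros t Ht. eapply Rle_trans; [apply Rmin_r|]. apply nf_bounds; exact Ht.
Qed.

Definition Dst (x y : traj) s := Rabs (Sh x s - Sh y s) + Rabs (Ih x s - Ih y s)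
  + Rabs (Sv x s - Sv y s) + Rabs (Iv x s - Iv y s).

Lemma Dst_pos x y s : 0 <= Dst x y s.
Proof. unfold Dst. assert (H1 := Rabs_pos (Sh x s - Sh y s)). assert (H2 := Rabs_pos (Ih x s - Ih y s)).
  assert (H3 := Rabs_pos (Sv x s - Sv y s)). assert (H4 := Rabs_pos (Iv x s - Iv y s)). lra. Qed.

Lemma div_lip a b N nl : 0 < nl -> nl <= N -> Rabs (a / N - b / N) <= Rabs (a - b) / nl.
Proof.
  intros Hnl HN. replace (a / N - b / N) with ((a - b) / N) by (field; lra).
  unfold Rdiv. rewrite Rabs_mult, Rabs_inv, (Rabs_right N) by lra.
  apply Rmult_le_compat_l; [apply Rabs_pos|]. apply Rinv_le_contravar; lra.
Qed.

Lemma abs_le_Dst1 x y s : Rabs (Sh x s - Sh y s) <= Dst x y s.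
Proof. unfold Dst. assert (H2 := Rabs_pos (Ih x s - Ih y s)).
  assert (H3 := Rabs_pos (Sv x s - Sv y s)). assert (H4 := Rabs_pos (Iv x s - Iv y s)). lra. Qed.
Lemma abs_le_Dst2 x y s : Rabs (Ih x s - Ih y s) <= Dst x y s.
Proof. unfold Dst. assert (H2 := Rabs_pos (Sh x s - Sh y s)).
  assert (H3 := Rabs_pos (Sv x s - Sv y s)). assert (H4 := Rabs_pos (Iv x s - Iv y s)). lra. Qed.
Lemma abs_le_Dst3 x y s : Rabs (Sv x s - Sv y s) <= Dst x y s.
Proof. unfold Dst. assert (H2 := Rabs_pos (Ih x s - Ih y s)).
  assert (H3 := Rabs_pos (Sh x s - Sh y s)). assert (H4 := Rabs_pos (Iv x s - Iv y s)). lra. Qed.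
Lemma abs_le_Dst4 x y s : Rabs (Iv x s - Iv y s) <= Dst x y s.
Proof. unfold Dst. assert (H2 := Rabs_pos (Ih x s - Ih y s)).
  assert (H3 := Rabs_pos (Sv x s - Sv y s)). assert (H4 := Rabs_pos (Sh x s - Sh y s)). lra. Qed.

Lemma inf_lip x y r M nl : 0 < nl -> 0 <= M ->
  Rabs (Iv x r) <= M -> Rabs (Sh y r) <= M ->
  Sv x r + Iv x r = Sv y r + Iv y r -> nl <= Sv x r + Iv x r ->
  Rabs (Cvh * (Iv x r / (Sv x r + Iv x r)) * Sh x r - Cvh * (Iv y r / (Sv y r + Iv y r)) * Sh y r)
   <= 2 * Cvh * M / nl * Dst x y r.
Proof.
  intros Hnl HM H1 H2 HN Hl. rewrite <- HN.
  set (N := Sv x r + Iv x r) in *.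
  replace (Cvh * (Iv x r / N) * Sh x r - Cvh * (Iv y r / N) * Sh y r)
    with (Cvh * ((Iv x r * Sh x r) / N - (Iv y r * Sh y r) / N)) by (field; unfold N in *; lra).
  rewrite Rabs_mult, (Rabs_right Cvh) by lra.
  assert (Hd := div_lip (Iv x r * Sh x r) (Iv y r * Sh y r) N nl Hnl Hl).
  assert (Hp := prod_lip _ (Sh x r) (Iv y r) _ M H1 H2).
  assert (Hs := abs_le_Dst1 x y r). assert (Hs4 := abs_le_Dst4 x y r).
  assert (Rabs (Iv x r * Sh x r - Iv y r * Sh y r) / nl <= M * (2 * Dst x y r) / nl).
  { unfold Rdiv. apply Rmult_le_compat_r; [left; apply Rinv_0_lt_compat; lra|]. 
    eapply Rle_trans; [exact Hp|]. apply Rmult_le_compat_l; lra. }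
  apply Rle_trans with (Cvh * (M * (2 * Dst x y r) / nl)).
  - apply Rmult_le_compat_l; lra.
  - right. field. lra.
Qed.

Lemma Nv_eq_low x y nl : sol x -> sol y ->
  (forall th, - tau <= th <= 0 -> nl <= Sv phi th + Iv phi th) -> (forall t, 0 <= t -> nl <= nf t) ->
  forall r, - tau <= r -> Sv x r + Iv x r = Sv y r + Iv y r /\ nl <= Sv x r + Iv x r.
Proof.
  intros Hx Hy H1 H2 r Hr. destruct (Rle_dec r 0) as [Hr0|Hr0].
  - destruct (sol_init x Hx r ltac:(lra)) as (_&_&->&->).
    destruct (sol_init y Hy r ltac:(lra)) as (_&_&->&->). split; [reflexivity|]. apply H1; lra.
  - rewrite (sol_Nv x Hx r), (sol_Nv y Hy r) by lra. split; [reflexivity|]. apply H2; lra.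
Qed.

Section Lip.
Variables (x y : traj) (M nl T : R).
Hypotheses (Hx : sol x) (Hy : sol y) (HM : 0 <= M) (Hnl : 0 < nl)
  (Hl1 : forall th, - tau <= th <= 0 -> nl <= Sv phi th + Iv phi th) (Hl2 : forall t, 0 <= t -> nl <= nf t)
  (HbSx : forall t, - tau <= t <= T -> Rabs (Sh x t) <= M)
  (HbIx : forall t, - tau <= t <= T -> Rabs (Ih x t) <= M)
  (HbSvx : forall t, - tau <= t <= T -> Rabs (Sv x t) <= M)
  (HbIvx : forall t, - tau <= t <= T -> Rabs (Iv x t) <= M)
  (HbSy : forall t, - tau <= t <= T -> Rabs (Sh y t) <= M)
  (HbIy : forall t, - tau <= t <= T -> Rabs (Ih y t) <= M)
  (HbSvy : forall t, - tau <= t <= T -> Rabs (Sv y t) <= M)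
  (HbIvy : forall t, - tau <= t <= T -> Rabs (Iv y t) <= M).

Definition Lc := 2 * Cvh * M / nl + 2 * Chv * M + mh + mv.

Lemma Lc_pos : 0 < Lc.
Proof.
  unfold Lc. assert (0 <= 2 * Cvh * M / nl) by (apply Rmult_le_pos; [nra|left; apply Rinv_0_lt_compat; lra]).
  nra.
Qed.

Lemma Lc_ge : 2 * Cvh * M / nl + mh <= Lc /\ 2 * Chv * M + mv <= Lc.
Proof.
  unfold Lc. assert (0 <= 2 * Cvh * M / nl) by (apply Rmult_le_pos; [nra|left; apply Rinv_0_lt_compat; lra]).
  split; nra.
Qed.

Lemma G_lip s : 0 < s <= T ->
  Rabs (G1 x s - G1 y s) <= Lc * (Dst x y s + Dst x y (s - tau)) /\
  Rabs (G2 x s - G2 y s) <= Lc * (Dst x y s + Dst x y (s - tau)) /\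
  Rabs (G3 x s - G3 y s) <= Lc * (Dst x y s + Dst x y (s - tau)) /\
  Rabs (G4 x s - G4 y s) <= Lc * (Dst x y s + Dst x y (s - tau)).
Proof.
  intros Hs. assert (HD0 := Dst_pos x y s). assert (HD1 := Dst_pos x y (s - tau)).
  destruct Lc_ge as [L1 L2].
  assert (HC0 : 0 <= 2 * Cvh * M / nl) by (apply Rmult_le_pos; [nra|left; apply Rinv_0_lt_compat; lra]).
  assert (HP1 : 0 <= Lc * Dst x y (s - tau)) by (apply Rmult_le_pos; [left; apply Lc_pos|lra]).
  assert (HP0 : 0 <= Lc * Dst x y s) by (apply Rmult_le_pos; [left; apply Lc_pos|lra]).
  split; [|split; [|split]].
  - unfold G1. destruct (Nv_eq_low x y nl Hx Hy Hl1 Hl2 s ltac:(lra)) as [E Hn].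
    assert (H := inf_lip x y s M nl Hnl HM (HbIvx s ltac:(lra)) (HbSy s ltac:(lra)) E Hn).
    assert (H1 := abs_le_Dst1 x y s).
    replace (bh - Cvh * (Iv x s / (Sv x s + Iv x s)) * Sh x s - mh * Sh x s -
      (bh - Cvh * (Iv y s / (Sv y s + Iv y s)) * Sh y s - mh * Sh y s))
     with (- (Cvh * (Iv x s / (Sv x s + Iv x s)) * Sh x s - Cvh * (Iv y s / (Sv y s + Iv y s)) * Sh y s)
           + - (mh * (Sh x s - Sh y s))) by ring.
    eapply Rle_trans; [apply Rabs_triang|]. rewrite !Rabs_Ropp, Rabs_mult, (Rabs_right mh) by lra.
    assert (mh * Rabs (Sh x s - Sh y s) <= mh * Dst x y s) by (apply Rmult_le_compat_l; lra).
    assert ((2 * Cvh * M / nl + mh) * Dst x y s <= Lc * Dst x y s) by (apply Rmult_le_compat_r; lra).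
    lra.
  - unfold G2. destruct (Nv_eq_low x y nl Hx Hy Hl1 Hl2 (s - tau) ltac:(lra)) as [E Hn].
    assert (H := inf_lip x y (s - tau) M nl Hnl HM (HbIvx (s - tau) ltac:(lra)) (HbSy (s - tau) ltac:(lra)) E Hn).
    assert (H1 := abs_le_Dst2 x y s).
    match goal with |- Rabs (?A - ?C - (?D - ?E)) <= _ =>
      replace (A - C - (D - E)) with ((A - D) + - (mh * (Ih x s - Ih y s))) by ring end.
    eapply Rle_trans; [apply Rabs_triang|]. rewrite !Rabs_Ropp, Rabs_mult, (Rabs_right mh) by lra.
    assert (mh * Rabs (Ih x s - Ih y s) <= mh * Dst x y s) by (apply Rmult_le_compat_l; lra).
    assert (2 * Cvh * M / nl * Dst x y (s - tau) <= Lc * Dst x y (s - tau)) by (apply Rmult_le_compat_r; lra).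
    assert (mh * Dst x y s <= Lc * Dst x y s) by (apply Rmult_le_compat_r; lra).
    lra.
  - unfold G3.
    assert (H := prod_lip (Ih x s) (Sv x s) (Ih y s) (Sv y s) M (HbIx s ltac:(lra)) (HbSvy s ltac:(lra))).
    assert (H2 := abs_le_Dst2 x y s). assert (H3 := abs_le_Dst3 x y s).
    replace (bv - Chv * Ih x s * Sv x s - mv * Sv x s - (bv - Chv * Ih y s * Sv y s - mv * Sv y s))
      with (- (Chv * (Ih x s * Sv x s - Ih y s * Sv y s)) + - (mv * (Sv x s - Sv y s))) by ring.
    eapply Rle_trans; [apply Rabs_triang|]. rewrite !Rabs_Ropp, !Rabs_mult, (Rabs_right Chv), (Rabs_right mv) by lra.
    assert (Chv * Rabs (Ih x s * Sv x s - Ih y s * Sv y s) <= Chv * (M * (2 * Dst x y s))).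
    { apply Rmult_le_compat_l; [lra|]. eapply Rle_trans; [exact H|]. apply Rmult_le_compat_l; lra. }
    assert (mv * Rabs (Sv x s - Sv y s) <= mv * Dst x y s) by (apply Rmult_le_compat_l; lra).
    assert ((2 * Chv * M + mv) * Dst x y s <= Lc * Dst x y s) by (apply Rmult_le_compat_r; lra).
    lra.
  - unfold G4.
    assert (H := prod_lip (Ih x s) (Sv x s) (Ih y s) (Sv y s) M (HbIx s ltac:(lra)) (HbSvy s ltac:(lra))).
    assert (H2 := abs_le_Dst2 x y s). assert (H3 := abs_le_Dst4 x y s). assert (H3v := abs_le_Dst3 x y s).
    replace (Chv * Ih x s * Sv x s - mv * Iv x s - (Chv * Ih y s * Sv y s - mv * Iv y s))
      with ((Chv * (Ih x s * Sv x s - Ih y s * Sv y s)) + - (mv * (Iv x s - Iv y s))) by ring.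
    eapply Rle_trans; [apply Rabs_triang|]. rewrite !Rabs_Ropp, !Rabs_mult, (Rabs_right Chv), (Rabs_right mv) by lra.
    assert (Chv * Rabs (Ih x s * Sv x s - Ih y s * Sv y s) <= Chv * (M * (2 * Dst x y s))).
    { apply Rmult_le_compat_l; [lra|]. eapply Rle_trans; [exact H|]. apply Rmult_le_compat_l; lra. }
    assert (mv * Rabs (Iv x s - Iv y s) <= mv * Dst x y s) by (apply Rmult_le_compat_l; lra).
    assert ((2 * Chv * M + mv) * Dst x y s <= Lc * Dst x y s) by (apply Rmult_le_compat_r; lra).
    lra.
Qed.
End Lip.

Lemma step_comp (f df : R -> R) a c h K : cont_on_from 0 f ->
  (forall z, 0 < z -> derivable_pt_lim f z (df z)) -> 0 <= a < c -> c - a <= h -> f a = 0 ->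
  (forall z, a < z < c -> Rabs (df z) <= K) -> Rabs (f c) <= K * h.
Proof.
  intros Hc Hd Hac Hh Ha Hb.
  destruct (mvt_from f df 0 a c Hc Hd ltac:(lra)) as [xi [Hxi E]].
  rewrite Ha, Rminus_0_r in E. rewrite E, Rabs_mult, (Rabs_right (c - a)) by lra.
  specialize (Hb xi Hxi). assert (0 <= Rabs (df xi)) by apply Rabs_pos.
  apply Rle_trans with (K * (c - a)); [apply Rmult_le_compat_r; lra|].
  apply Rmult_le_compat_l; lra.
Qed.

Lemma sol_cont x : sol x -> cont_on_from (- tau) (Sh x) /\ cont_on_from (- tau) (Ih x) /\
  cont_on_from (- tau) (Sv x) /\ cont_on_from (- tau) (Iv x).
Proof. intros (_&A&B&C&D&_). auto. Qed.

Lemma sol_der x : sol x -> forall s, 0 < s ->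
  derivable_pt_lim (Sh x) s (G1 x s) /\ derivable_pt_lim (Ih x) s (G2 x s) /\
  derivable_pt_lim (Sv x) s (G3 x s) /\ derivable_pt_lim (Iv x) s (G4 x s).
Proof. intros (_&_&_&_&_&_&H) s Hs. exact (H s Hs). Qed.

Lemma cont_diff0 f g : cont_on_from (- tau) f -> cont_on_from (- tau) g -> cont_on_from 0 (fun s => f s - g s).
Proof.
  intros Hf Hg. apply cont_from_of_ext. intros z. apply cp_minus; apply ext_from_cont;
  (eapply cont_from_mono; [|eassumption]; lra).
Qed.

Theorem uniq_D x y : sol x -> sol y -> forall t, - tau <= t -> Dst x y t = 0.
Proof.
  intros Hx Hy t Ht. set (T := Rmax 0 t).
  destruct (sol_cont x Hx) as (Cx1&Cx2&Cx3&Cx4).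
  destruct (sol_cont y Hy) as (Cy1&Cy2&Cy3&Cy4).
  destruct (bounded_from _ _ Cx1 T) as [M1 [M1p B1]].
  destruct (bounded_from _ _ Cx2 T) as [M2 [M2p B2]].
  destruct (bounded_from _ _ Cx3 T) as [M3 [M3p B3]].
  destruct (bounded_from _ _ Cx4 T) as [M4 [M4p B4]].
  destruct (bounded_from _ _ Cy1 T) as [M5 [M5p B5]].
  destruct (bounded_from _ _ Cy2 T) as [M6 [M6p B6]].
  destruct (bounded_from _ _ Cy3 T) as [M7 [M7p B7]].
  destruct (bounded_from _ _ Cy4 T) as [M8 [M8p B8]].
  set (M := M1 + M2 + M3 + M4 + M5 + M6 + M7 + M8).
  assert (HM : 0 <= M) by (unfold M; lra).
  assert (Bd : forall f Mi, (forall s, - tau <= s <= T -> Rabs (f s) <= Mi) -> Mi <= M ->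
     forall s, - tau <= s <= T -> Rabs (f s) <= M).
  { intros f Mi Hf HMi s Hs. specialize (Hf s Hs). lra. }
  destruct Nphi_lower as [nl [Hnl [Hl1 Hl2]]].
  assert (HL := Lc_pos M nl HM Hnl).
  set (L := Lc M nl) in *.
  set (h := / (16 * L)).
  assert (Hh : 0 < h) by (unfold h; apply Rinv_0_lt_compat; lra).
  assert (Hlh : 8 * L * h = / 2) by (unfold h; field; lra).
  assert (Lip := G_lip x y M nl T Hx Hy HM Hnl Hl1 Hl2
     (Bd _ _ B2 ltac:(unfold M; lra)) 
     (Bd _ _ B4 ltac:(unfold M; lra)) (Bd _ _ B5 ltac:(unfold M; lra))
     (Bd _ _ B7 ltac:(unfold M; lra))).
  fold L in Lip.
  assert (Claim : forall k : nat, forall s, - tau <= s <= T -> s <= INR k * h -> Dst x y s = 0).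
  { induction k as [|k IH]; intros s Hs Hsk.
    - simpl in Hsk. rewrite Rmult_0_l in Hsk. unfold Dst.
      destruct (sol_init x Hx s ltac:(lra)) as (->&->&->&->).
      destruct (sol_init y Hy s ltac:(lra)) as (->&->&->&->).
      rewrite !Rminus_eq_0, !Rabs_R0. ring.
    - set (a := INR k * h) in *.
      assert (Ha0 : 0 <= a) by (unfold a; apply Rmult_le_pos; [apply pos_INR|lra]).
      destruct (Rle_dec s a) as [Hsa|Hsa]; [apply IH; lra|]. apply Rnot_le_lt in Hsa.
      rewrite S_INR in Hsk. fold a in Hsk.
      assert (Hsk' : s <= a + h) by (unfold a in *; nra).
      set (b := Rmin (a + h) T).
      assert (Hab : a <= b) by (unfold b, Rmin; destruct Rle_dec; lra).
      assert (Hcp : forall c, a <= c <= b -> continuity_pt (fun r => Dst x y (Rmax (- tau) r)) c).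
      { intros c _. unfold Dst. cont; apply ext_from_cont; assumption. }
      destruct (continuity_ab_maj _ a b Hab Hcp) as [c [Hmax Hc]].
      assert (Ec : Rmax (- tau) c = c) by (apply Rmax_right; lra).
      rewrite Ec in Hmax.
      assert (Hmax' : forall r, a <= r <= b -> Dst x y r <= Dst x y c).
      { intros r Hr. specialize (Hmax r Hr). rewrite Rmax_right in Hmax by lra. exact Hmax. }
      assert (HbT : b <= T) by (unfold b; apply Rmin_r).
      assert (Hbah : b <= a + h) by (unfold b; apply Rmin_l).
      assert (HDa : Dst x y a = 0) by (apply IH; [lra|lra]).
      assert (Hcz : Dst x y c = 0).
      { destruct (Req_dec c a) as [->|Hca]; [exact HDa|].
        assert (Hac : a < c) by lra.
        assert (Hcomp : forall i, Rabs i <= Dst x y a -> i = 0).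
        { intros i Hi. rewrite HDa in Hi. assert (H0 := Rabs_pos i).
          destruct (Rcase_abs i); [rewrite Rabs_left in Hi by lra; lra|rewrite Rabs_right in Hi by lra; lra]. }
        set (K := L * (2 * Dst x y c)).
        assert (Hbnd : forall z, a < z < c ->
          Dst x y z + Dst x y (z - tau) <= 2 * Dst x y c).
        { intros z Hz. assert (Dst x y z <= Dst x y c) by (apply Hmax'; lra).
          destruct (Rle_dec (z - tau) a) as [Hza|Hza].
          - assert (Dst x y (z - tau) = 0) by (apply IH; [split; lra|lra]). assert (0 <= Dst x y z) by apply Dst_pos. lra.
          - assert (Dst x y (z - tau) <= Dst x y c) by (apply Hmax'; lra). lra. }
        assert (Hder : forall z, a < z < c ->
           Rabs (G1 x z - G1 y z) <= K /\ Rabs (G2 x z - G2 y z) <= K /\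
           Rabs (G3 x z - G3 y z) <= K /\ Rabs (G4 x z - G4 y z) <= K).
        { intros z Hz. destruct (Lip z ltac:(lra)) as (L1&L2&L3&L4).
          assert (L * (Dst x y z + Dst x y (z - tau)) <= K).
          { unfold K. apply Rmult_le_compat_l; [lra|]. apply Hbnd; exact Hz. }
          repeat split; lra. }
        assert (E1 : Rabs (Sh x c - Sh y c) <= K * h).
        { apply (step_comp (fun s => Sh x s - Sh y s) (fun s => G1 x s - G1 y s) a c h K).
          - apply cont_diff0; assumption.
          - intros z Hz. apply derivable_pt_lim_minus; apply (sol_der _ Hx z Hz) || apply (sol_der _ Hy z Hz).
          - lra. - lra.
          - apply Hcomp. apply abs_le_Dst1.
          - intros z Hz. apply (Hder z Hz). }
        assert (E2 : Rabs (Ih x c - Ih y c) <= K * h).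
        { apply (step_comp (fun s => Ih x s - Ih y s) (fun s => G2 x s - G2 y s) a c h K).
          - apply cont_diff0; assumption.
          - intros z Hz. apply derivable_pt_lim_minus; apply (sol_der _ Hx z Hz) || apply (sol_der _ Hy z Hz).
          - lra. - lra.
          - apply Hcomp. apply abs_le_Dst2.
          - intros z Hz. apply (Hder z Hz). }
        assert (E3 : Rabs (Sv x c - Sv y c) <= K * h).
        { apply (step_comp (fun s => Sv x s - Sv y s) (fun s => G3 x s - G3 y s) a c h K).
          - apply cont_diff0; assumption.
          - intros z Hz. apply derivable_pt_lim_minus; apply (sol_der _ Hx z Hz) || apply (sol_der _ Hy z Hz).
          - lra. - lra.
          - apply Hcomp. apply abs_le_Dst3.
          - intros z Hz. apply (Hder z Hz). }
        assert (E4 : Rabs (Iv x c - Iv y c) <= K * h).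
        { apply (step_comp (fun s => Iv x s - Iv y s) (fun s => G4 x s - G4 y s) a c h K).
          - apply cont_diff0; assumption.
          - intros z Hz. apply derivable_pt_lim_minus; apply (sol_der _ Hx z Hz) || apply (sol_der _ Hy z Hz).
          - lra. - lra.
          - apply Hcomp. apply abs_le_Dst4.
          - intros z Hz. apply (Hder z Hz). }
        assert (Dst x y c <= 4 * K * h) by (unfold Dst; lra).
        assert (4 * K * h = Dst x y c / 2) by (unfold K; replace (4 * (L * (2 * Dst x y c)) * h) with (8 * L * h * Dst x y c) by ring; rewrite Hlh; field).
        assert (0 <= Dst x y c) by apply Dst_pos. lra. }
      assert (Dst x y s <= Dst x y c) by (apply Hmax'; unfold b, Rmin; destruct Rle_dec; lra).
      assert (0 <= Dst x y s) by apply Dst_pos. lra. }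
  destruct (nat_above (t / h)) as [k Hk].
  apply (Claim k t).
  - split; [lra|unfold T; apply Rmax_r].
  - apply Rmult_lt_compat_r with (r := h) in Hk; [|lra].
    unfold Rdiv in Hk. rewrite Rmult_assoc, Rinv_l, Rmult_1_r in Hk by lra. lra.
Qed.

Theorem uniq x y : sol x -> sol y -> forall t, - tau <= t ->
  Sh x t = Sh y t /\ Ih x t = Ih y t /\ Sv x t = Sv y t /\ Iv x t = Iv y t.
Proof.
  intros Hx Hy t Ht. assert (H := uniq_D x y Hx Hy t Ht).
  assert (Z : forall i, Rabs i <= 0 -> i = 0).
  { intros i Hi. assert (H0 := Rabs_pos i).
    destruct (Rcase_abs i); [rewrite Rabs_left in Hi by lra; lra|rewrite Rabs_right in Hi by lra; lra]. }
  assert (A1 := abs_le_Dst1 x y t). assert (A2 := abs_le_Dst2 x y t).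
  assert (A3 := abs_le_Dst3 x y t). assert (A4 := abs_le_Dst4 x y t). rewrite H in *.
  repeat split; apply Rminus_diag_uniq, Z; assumption.
Qed.

End Sys.

Lemma cpt_continuous f x : continuity_pt f x -> continuous f x.
Proof. intros H. apply continuity_pt_filterlim in H. exact H. Qed.

Lemma rint_ex g a b : (forall s, continuity_pt g s) -> ex_RInt g a b.
Proof. intros H. apply (ex_RInt_continuous (V := R_CompleteNormedModule)). intros z _. apply cpt_continuous, H. Qed.

Lemma rint_deriv g t : (forall s, continuity_pt g s) -> derivable_pt_lim (fun y => RInt g 0 y) t (g t).
Proof.
  intros H. apply is_derive_Reals. apply (is_derive_RInt g (fun y => RInt g 0 y) 0 t).
  - apply filter_forall. intros b. apply (@RInt_correct R_CompleteNormedModule), rint_ex, H.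
  - apply cpt_continuous, H.
Qed.

Lemma rint_cont g : (forall s, continuity_pt g s) -> forall z, continuity_pt (fun t => RInt g 0 (Rmax 0 t)) z.
Proof.
  intros H z. apply (cp_comp (fun t => Rmax 0 t) (fun y => RInt g 0 y)); [apply cp_Rmax|].
  apply derivable_continuous_pt. exists (g (Rmax 0 z)). apply rint_deriv, H.
Qed.

Lemma rint_zero g : RInt g 0 0 = 0.
Proof. rewrite RInt_point. reflexivity. Qed.

Lemma rint_exp M c t : 0 < c -> RInt (fun s => M * exp (c * s)) 0 t = M * (exp (c * t) - 1) / c.
Proof.
  intros Hc. apply is_RInt_unique.
  replace (M * (exp (c * t) - 1) / c) with (minus (M / c * exp (c * t)) (M / c * exp (c * 0))).
  2:{ unfold minus, plus, opp; simpl. rewrite Rmult_0_r, exp_0. field. lra. }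
  apply (is_RInt_derive (fun s => M / c * exp (c * s))).
  - intros x _. auto_derive; [exact I|]. field. lra.
  - intros x _. apply cpt_continuous. cont.
Qed.

Lemma rint_bound g t M c : (forall s, continuity_pt g s) -> 0 <= t -> 0 < c ->
  (forall s, 0 <= s <= t -> Rabs (g s) <= M * exp (c * s)) ->
  Rabs (RInt g 0 t) <= M * (exp (c * t) - 1) / c.
Proof.
  intros Hg Ht Hc Hb.
  eapply Rle_trans; [apply abs_RInt_le; [exact Ht|apply rint_ex, Hg]|].
  rewrite <- rint_exp by exact Hc.
  apply RInt_le; [exact Ht| | |].
  - apply rint_ex. intros s. apply (cp_comp g Rabs); [apply Hg|apply cp_abs].
  - apply rint_ex. intros s. cont.
  - intros x Hx. apply Hb. lra.
Qed.

Lemma half_pow_pos k : 0 < (/ 2) ^ k.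
Proof. apply pow_lt. lra. Qed.

Lemma half_pow_small C eps : 0 < eps -> exists N, forall n, (n >= N)%nat -> C * (/ 2) ^ n < eps.
Proof.
  intros He. destruct (Rle_dec C 0) as [HC|HC].
  - exists 0%nat. intros n _. assert (H := half_pow_pos n). nra.
  - destruct (pow_lt_1_zero (/ 2) ltac:(rewrite Rabs_right; lra) (eps / C) ltac:(apply Rdiv_lt_0_compat; lra))
      as [N HN].
    exists N. intros n Hn. specialize (HN n Hn). rewrite Rabs_right in HN by (left; apply half_pow_pos).
    apply (Rmult_lt_compat_l C) in HN; [|lra]. unfold Rdiv in HN.
    rewrite <- Rmult_assoc, (Rmult_comm C eps), Rmult_assoc, Rinv_r, Rmult_1_r in HN by lra. exact HN.
Qed.

Lemma geom_zero z C : (forall k, Rabs z <= C * (/ 2) ^ k) -> z = 0.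
Proof.
  intros H. destruct (Req_dec z 0) as [ok|Hne]; [exact ok|exfalso].
  assert (Hp : 0 < Rabs z) by (apply Rabs_pos_lt; exact Hne).
  destruct (half_pow_small C (Rabs z) Hp) as [N HN]. specialize (HN N (le_n N)).
  specialize (H N). lra.
Qed.

Lemma geom_tail (x : nat -> R) C : (forall k, Rabs (x (S k) - x k) <= C * (/ 2) ^ k) ->
  forall k m, Rabs (x (k + m)%nat - x k) <= 2 * C * ((/ 2) ^ k - (/ 2) ^ (k + m)).
Proof.
  intros H k m. induction m as [|m IH].
  - rewrite Nat.add_0_r, Rminus_eq_0, Rabs_R0. lra.
  - rewrite Nat.add_succ_r.
    replace (x (S (k + m)) - x k) with ((x (S (k + m)) - x (k + m)%nat) + (x (k + m)%nat - x k)) by ring.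
    eapply Rle_trans; [apply Rabs_triang|]. specialize (H (k + m)%nat).
    simpl pow. lra.
Qed.

Lemma geom_tail' (x : nat -> R) C : 0 <= C -> (forall k, Rabs (x (S k) - x k) <= C * (/ 2) ^ k) ->
  forall k n, (k <= n)%nat -> Rabs (x n - x k) <= 2 * C * (/ 2) ^ k.
Proof.
  intros HC H k n Hkn. replace n with (k + (n - k))%nat by lia.
  eapply Rle_trans; [apply geom_tail; exact H|].
  assert (0 < (/ 2) ^ (k + (n - k))) by apply half_pow_pos. nra.
Qed.

Lemma geom_limit (x : nat -> R) C : 0 <= C -> (forall k, Rabs (x (S k) - x k) <= C * (/ 2) ^ k) ->
  { l | forall k, Rabs (x k - l) <= 2 * C * (/ 2) ^ k }.
Proof.
  intros HC H.
  assert (Hc : Cauchy_crit x).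
  { intros eps He. destruct (half_pow_small (4 * C) eps He) as [N HN]. exists N.
    intros n m Hn Hm. unfold Rdist.
    replace (x n - x m) with ((x n - x N) + - (x m - x N)) by ring.
    eapply Rle_lt_trans; [apply Rabs_triang|]. rewrite Rabs_Ropp.
    assert (A1 := geom_tail' x C HC H N n Hn). assert (A2 := geom_tail' x C HC H N m Hm).
    specialize (HN N (le_n N)). lra. }
  destruct (Rcomplete.R_complete x Hc) as [l Hl]. exists l. intros k.
  destruct (Rle_dec (Rabs (x k - l)) (2 * C * (/ 2) ^ k)) as [ok|Hn]; [exact ok|exfalso].
  apply Rnot_le_lt in Hn. set (eps := Rabs (x k - l) - 2 * C * (/ 2) ^ k).
  destruct (Hl eps ltac:(unfold eps; lra)) as [N HN].
  specialize (HN (max N k) (Nat.le_max_l _ _)). unfold Rdist in HN.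
  assert (A := geom_tail' x C HC H k (max N k) (Nat.le_max_r _ _)).
  replace (x k - l) with (- (x (max N k) - x k) + (x (max N k) - l)) in Hn by ring.
  assert (B := Rabs_triang (- (x (max N k) - x k)) (x (max N k) - l)). rewrite Rabs_Ropp in B.
  unfold eps in HN. replace (x k - l) with (- (x (max N k) - x k) + (x (max N k) - l)) in HN by ring.
  lra.
Qed.

Lemma lim_cont (fk : nat -> R -> R) (f : R -> R) B c : 0 <= B -> 0 < c ->
  (forall k z, continuity_pt (fk k) z) ->
  (forall k t, Rabs (fk k t - f t) <= B * exp (c * t) * (/ 2) ^ k) ->
  forall z, continuity_pt f z.
Proof.
  intros HB Hc Hk Hb z eps He.
  set (C := B * exp (c * (Rabs z + 1))).
  destruct (half_pow_small C (eps / 3) ltac:(lra)) as [N HN]. specialize (HN N (le_n N)).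
  destruct (Hk N z (eps / 3) ltac:(lra)) as [d [Hd Hd']].
  exists (Rmin d 1). split; [apply Rmin_Rgt_r; split; lra|].
  intros x [Hx1 Hx2]. simpl in *. unfold R_dist in *.
  assert (Hxd : Rabs (x - z) < d) by (eapply Rlt_le_trans; [exact Hx2|apply Rmin_l]).
  assert (Hx1' : Rabs (x - z) < 1) by (eapply Rlt_le_trans; [exact Hx2|apply Rmin_r]).
  specialize (Hd' x (conj Hx1 Hxd)). simpl in Hd'. unfold R_dist in Hd'.
  assert (Bnd : forall y, Rabs (y - z) < 1 -> B * exp (c * y) * (/ 2) ^ N <= C * (/ 2) ^ N).
  { intros y Hy. unfold C. apply Rmult_le_compat_r; [left; apply half_pow_pos|].
    apply Rmult_le_compat_l; [exact HB|]. destruct (Req_dec y (Rabs z + 1)) as [->|]; [lra|].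
    left. apply exp_increasing. apply Rmult_lt_compat_l; [exact Hc|].
    unfold Rabs in *; repeat destruct Rcase_abs; lra. }
  assert (E1 := Hb N x). assert (E2 := Hb N z).
  assert (F1 := Bnd x Hx1'). assert (F2 := Bnd z ltac:(rewrite Rminus_eq_0, Rabs_R0; lra)).
  replace (f x - f z) with (- (fk N x - f x) + (fk N x - fk N z) + (fk N z - f z)) by ring.
  eapply Rle_lt_trans; [apply Rabs_triang|].
  eapply Rle_lt_trans; [apply Rplus_le_compat_r, Rabs_triang|]. rewrite Rabs_Ropp. lra.
Qed.

Definition cl K v := Rmax 0 (Rmin K v).
Lemma cl_lip K a b : Rabs (cl K a - cl K b) <= Rabs (a - b).
Proof. unfold cl. eapply Rle_trans; [apply Rmax_lip|apply Rmin_lip]. Qed.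
Lemma cl_range K a : 0 <= K -> 0 <= cl K a <= K.
Proof. intros HK. unfold cl, Rmax, Rmin. repeat destruct Rle_dec; lra. Qed.
Lemma cl_id K a : 0 <= a <= K -> cl K a = a.
Proof. intros H. unfold cl, Rmax, Rmin. repeat destruct Rle_dec; lra. Qed.
Lemma cl_le K M a : 0 <= M -> a <= M -> cl K a <= M.
Proof. intros H1 H2. unfold cl, Rmax, Rmin. repeat destruct Rle_dec; lra. Qed.
Lemma cl_zero K a : a <= 0 -> cl K a = 0.
Proof. intros H. unfold cl, Rmax, Rmin. repeat destruct Rle_dec; lra. Qed.
Lemma cp_cl K f x : continuity_pt f x -> continuity_pt (fun t => cl K (f t)) x.
Proof. intros H. apply (cp_comp f (cl K)); [exact H|]. apply lip_cont, cl_lip. Qed.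

Lemma clprod_lip K a b a' b' : 0 <= K ->
  Rabs (cl K a * cl K b - cl K a' * cl K b') <= K * (Rabs (b - b') + Rabs (a - a')).
Proof.
  intros HK. assert (H1 := cl_range K a HK). assert (H2 := cl_range K b' HK).
  eapply Rle_trans; [apply (prod_lip _ _ _ _ K); rewrite Rabs_right; lra|].
  apply Rmult_le_compat_l; [lra|]. assert (E1 := cl_lip K b b'). assert (E2 := cl_lip K a a'). lra.
Qed.

Lemma weight_deriv f df m k t : derivable_pt_lim f t df ->
  derivable_pt_lim (fun y => (f y - k) * exp (m * y)) t ((df + m * (f t - k)) * exp (m * t)).
Proof.
  intros H.
  assert (H1 : derivable_pt_lim (fun y => f y - k) t df).
  { replace df with (df - 0) by ring. apply (derivable_pt_lim_minus f (fun _ => k)); [exact H|].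
    apply derivable_pt_lim_const. }
  assert (H2 : derivable_pt_lim (fun y => exp (m * y)) t (m * exp (m * t))).
  { apply is_derive_Reals. auto_derive; [exact I|ring]. }
  assert (H3 := derivable_pt_lim_mult _ _ _ _ _ H1 H2).
  replace ((df + m * (f t - k)) * exp (m * t)) with (df * exp (m * t) + (f t - k) * (m * exp (m * t))) by ring.
  exact H3.
Qed.

Lemma exp_big m s K0 : 0 < m -> 0 <= K0 -> K0 / m <= s -> 1 + K0 <= exp (m * s).
Proof.
  intros Hm HK Hs. eapply Rle_trans; [|apply exp_ineq1_le].
  assert (K0 <= m * s). { apply (Rmult_le_compat_l m) in Hs; [|lra]. unfold Rdiv in Hs.
    rewrite <- Rmult_assoc, (Rmult_comm m K0), Rmult_assoc, Rinv_r, Rmult_1_r in Hs by lra. exact Hs. }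
  lra.
Qed.

Inductive idx := i1 | i2 | i3 | i4.
Definition comp (i : idx) (u : traj) : R -> R :=
  match i with i1 => Sh u | i2 => Ih u | i3 => Sv u | i4 => Iv u end.

Lemma Dst_comp u v s : Dst u v s = Rabs (comp i1 u s - comp i1 v s) + Rabs (comp i2 u s - comp i2 v s)
  + Rabs (comp i3 u s - comp i3 v s) + Rabs (comp i4 u s - comp i4 v s).
Proof. reflexivity. Qed.

Lemma comp_le_Dst i u v s : Rabs (comp i u s - comp i v s) <= Dst u v s.
Proof. destruct i; simpl. apply abs_le_Dst1. apply abs_le_Dst2. apply abs_le_Dst3. apply abs_le_Dst4. Qed.

Section Cons.
Variables bh bv mh mv Cvh Chv tau : R.
Hypotheses (Hbh : 0 < bh) (Hbv : 0 < bv) (Hmh : 0 < mh) (Hmv : 0 < mv)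
  (HCvh : 0 < Cvh) (HChv : 0 < Chv) (Htau : 0 <= tau).
Variable phi : traj.
Hypothesis Hphi : in_Cplus tau phi.
Variables P nl : R.
Hypotheses (HP : 0 < P) (Hnl : 0 < nl)
  (Hl1 : forall th, - tau <= th <= 0 -> nl <= Sv phi th + Iv phi th)
  (Hl2 : forall t, 0 <= t -> nl <= nf bv mv phi t).

Definition ext (f : R -> R) t := f (Rmax (- tau) (Rmin 0 t)).
Definition pc i := ext (comp i phi).

Lemma clamp_in t : - tau <= Rmax (- tau) (Rmin 0 t) <= 0.
Proof. split; [apply Rmax_l|]. apply Rmax_lub; [lra|apply Rmin_l]. Qed.
Lemma clamp_id t : - tau <= t <= 0 -> Rmax (- tau) (Rmin 0 t) = t.
Proof. intros H. rewrite Rmin_right by lra. apply Rmax_right; lra. Qed.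
Lemma clamp_pos t : 0 <= t -> Rmax (- tau) (Rmin 0 t) = 0.
Proof. intros H. rewrite Rmin_left by lra. apply Rmax_right; lra. Qed.

Lemma pc_cont i z : continuity_pt (pc i) z.
Proof.
  destruct Hphi as (C1&C2&C3&C4&_). unfold pc, ext.
  destruct i; simpl; apply ext_int_cont; auto; lra.
Qed.

Lemma pc_nonneg i t : 0 <= pc i t.
Proof.
  destruct Hphi as (_&_&_&_&H). unfold pc, ext. destruct (H _ (clamp_in t)) as (A&B&C&D&_).
  destruct i; simpl; assumption.
Qed.

Hypothesis HPb : forall i t, pc i t <= P.

Definition nn t := pc i3 t + pc i4 t - N0 phi + nf bv mv phi (Rmax 0 t).

Lemma nn_low t : nl <= nn t.
Proof.
  unfold nn, pc, ext; simpl. destruct (Rle_dec t 0) as [Ht|Ht].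
  - rewrite (Rmax_left 0 t) by lra. rewrite nf_0 by lra.
    assert (H := Hl1 _ (clamp_in t)). lra.
  - rewrite clamp_pos by lra. unfold N0. rewrite Rmax_right by lra. ring_simplify. apply Hl2; lra.
Qed.

Lemma nn_pos t : 0 < nn t.
Proof. assert (H := nn_low t). lra. Qed.

Lemma nn_cont z : continuity_pt nn z.
Proof.
  unfold nn. apply cp_plus; [apply cp_minus; [apply cp_plus; apply pc_cont|apply cp_const]|].
  apply (cp_comp (fun t => Rmax 0 t)); [apply cp_Rmax|apply nf_cont; lra].
Qed.

Definition M1 := Rmax P (bh / mh).
Definition M3 := Rmax P (Cvh * M1 / mh).
Definition M2 := Rmax (N0 phi) (bv / mv).
Definition K := P + M1 + M2 + M3.

Lemma M_facts : 0 < M1 /\ 0 < M2 /\ 0 < M3 /\ P <= M1 /\ bh / mh <= M1 /\ P <= M3 /\ Cvh * M1 / mh <= M3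
  /\ N0 phi <= M2 /\ bv / mv <= M2 /\ M1 <= K /\ M2 <= K /\ M3 <= K /\ P <= K /\ 0 < K.
Proof.
  assert (A1 : P <= M1) by apply Rmax_l. assert (A2 : bh / mh <= M1) by apply Rmax_r.
  assert (A3 : P <= M3) by apply Rmax_l. assert (A4 : Cvh * M1 / mh <= M3) by apply Rmax_r.
  assert (A5 : N0 phi <= M2) by apply Rmax_l. assert (A6 : bv / mv <= M2) by apply Rmax_r.
  assert (0 < bv / mv) by (apply Rdiv_lt_0_compat; lra).
  unfold K. repeat split; lra.
Qed.

Definition F1 (u : traj) s := bh - Cvh * (cl K (Iv u s) * cl K (Sh u s)) / nn s - mh * Sh u s.
Definition F2 (u : traj) s := Cvh * (cl K (Iv u (s - tau)) * cl K (Sh u (s - tau))) / nn (s - tau) - mh * Ih u s.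
Definition F3 (u : traj) s := bv - Chv * (cl K (Ih u s) * cl K (Sv u s)) - mv * Sv u s.
Definition F4 (u : traj) s := Chv * (cl K (Ih u s) * cl K (Sv u s)) - mv * Iv u s.
Definition Fc i u := match i with i1 => F1 u | i2 => F2 u | i3 => F3 u | i4 => F4 u end.

Definition ccont u := forall i z, continuity_pt (comp i u) z.

Lemma Fc_cont i u : ccont u -> forall s, continuity_pt (Fc i u) s.
Proof.
  intros Hu s.
  assert (H1 : forall z, continuity_pt (Sh u) z) by (intros; apply (Hu i1)).
  assert (H2 : forall z, continuity_pt (Ih u) z) by (intros; apply (Hu i2)).
  assert (H3 : forall z, continuity_pt (Sv u) z) by (intros; apply (Hu i3)).
  assert (H4 : forall z, continuity_pt (Iv u) z) by (intros; apply (Hu i4)).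
  assert (Hsh : forall f, (forall z, continuity_pt f z) -> continuity_pt (fun t => f (t - tau)) s).
  { intros f Hf. apply (cp_comp (fun t => t - tau) f); [cont|apply Hf]. }
  destruct i; simpl; unfold F1, F2, F3, F4.
  - apply cp_minus; [apply cp_minus; [apply cp_const|]|apply cp_mult; [apply cp_const|apply H1]].
    apply cp_div; [apply cp_mult; [apply cp_const|apply cp_mult; apply cp_cl; auto]|apply nn_cont|].
    apply Rgt_not_eq, nn_pos.
  - apply cp_minus; [|apply cp_mult; [apply cp_const|apply H2]].
    apply cp_div; [apply cp_mult; [apply cp_const|apply cp_mult; apply cp_cl; auto]|
      apply (cp_comp (fun t => t - tau) nn); [cont|apply nn_cont]|].
    apply Rgt_not_eq, nn_pos.
  - apply cp_minus; [apply cp_minus; [apply cp_const|]|apply cp_mult; [apply cp_const|apply H3]].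
    apply cp_mult; [apply cp_const|apply cp_mult; apply cp_cl; auto].
  - apply cp_minus; [|apply cp_mult; [apply cp_const|apply H4]].
    apply cp_mult; [apply cp_const|apply cp_mult; apply cp_cl; auto].
Qed.

Definition Lf := 2 * Cvh * K / nl + 2 * Chv * K + mh + mv.

Lemma Lf_facts : 0 < Lf /\ 2 * Cvh * K / nl + mh <= Lf /\ 2 * Chv * K + mv <= Lf /\ 0 <= 2 * Cvh * K / nl.
Proof.
  destruct M_facts as (_&_&_&_&_&_&_&_&_&_&_&_&_&HK).
  assert (0 <= 2 * Cvh * K / nl) by (apply Rmult_le_pos; [nra|left; apply Rinv_0_lt_compat; lra]).
  unfold Lf. repeat split; nra.
Qed.

Lemma div_nn_lip Xa Xb r : Rabs (Cvh * Xa / nn r - Cvh * Xb / nn r) <= Cvh * Rabs (Xa - Xb) / nl.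
Proof.
  assert (Hn := nn_low r). assert (Hp := nn_pos r).
  replace (Cvh * Xa / nn r - Cvh * Xb / nn r) with (Cvh * ((Xa - Xb) / nn r)) by (field; lra).
  rewrite Rabs_mult, (Rabs_right Cvh) by lra. unfold Rdiv. rewrite Rmult_assoc.
  apply Rmult_le_compat_l; [lra|]. rewrite Rabs_mult, Rabs_inv, (Rabs_right (nn r)) by lra.
  apply Rmult_le_compat_l; [apply Rabs_pos|]. apply Rinv_le_contravar; lra.
Qed.

Lemma Fc_lip i u v s : Rabs (Fc i u s - Fc i v s) <= Lf * (Dst u v s + Dst u v (s - tau)).
Proof.
  destruct M_facts as (_&_&_&_&_&_&_&_&_&_&_&_&_&HK).
  destruct Lf_facts as (L0&L1&L2&L3).
  assert (HD0 := Dst_pos u v s). assert (HD1 := Dst_pos u v (s - tau)).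
  assert (HP0 : 0 <= Lf * Dst u v s) by (apply Rmult_le_pos; lra).
  assert (HP1 : 0 <= Lf * Dst u v (s - tau)) by (apply Rmult_le_pos; lra).
  assert (CP : forall r a b a' b', Rabs (a - a') <= Dst u v r -> Rabs (b - b') <= Dst u v r ->
     Rabs (cl K a * cl K b - cl K a' * cl K b') <= K * (2 * Dst u v r)).
  { intros r a b a' b' Ha Hb. eapply Rle_trans; [apply clprod_lip; lra|]. apply Rmult_le_compat_l; lra. }
  destruct i; simpl; unfold F1, F2, F3, F4.
  - assert (H := div_nn_lip (cl K (Iv u s) * cl K (Sh u s)) (cl K (Iv v s) * cl K (Sh v s)) s).
    assert (H' := CP s _ _ _ _ (abs_le_Dst4 u v s) (abs_le_Dst1 u v s)).
    assert (H1 := abs_le_Dst1 u v s).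
    match goal with |- Rabs (?b - ?A - ?C - (?b - ?D - ?E)) <= _ =>
      replace (b - A - C - (b - D - E)) with (- (A - D) + - (mh * (Sh u s - Sh v s))) by ring end.
    eapply Rle_trans; [apply Rabs_triang|]. rewrite !Rabs_Ropp, Rabs_mult, (Rabs_right mh) by lra.
    assert (Cvh * Rabs (cl K (Iv u s) * cl K (Sh u s) - cl K (Iv v s) * cl K (Sh v s)) / nl
       <= 2 * Cvh * K / nl * Dst u v s).
    { unfold Rdiv. replace (2 * Cvh * K * / nl * Dst u v s) with (Cvh * (K * (2 * Dst u v s)) * / nl) by ring.
      apply Rmult_le_compat_r; [left; apply Rinv_0_lt_compat; lra|]. apply Rmult_le_compat_l; lra. }
    assert (mh * Rabs (Sh u s - Sh v s) <= mh * Dst u v s) by (apply Rmult_le_compat_l; lra).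
    assert ((2 * Cvh * K / nl + mh) * Dst u v s <= Lf * Dst u v s) by (apply Rmult_le_compat_r; lra).
    lra.
  - set (r := s - tau). assert (HDr := Dst_pos u v r).
    assert (H := div_nn_lip (cl K (Iv u r) * cl K (Sh u r)) (cl K (Iv v r) * cl K (Sh v r)) r).
    assert (H' := CP r _ _ _ _ (abs_le_Dst4 u v r) (abs_le_Dst1 u v r)).
    assert (H1 := abs_le_Dst2 u v s).
    match goal with |- Rabs (?A - ?C - (?D - ?E)) <= _ =>
      replace (A - C - (D - E)) with ((A - D) + - (mh * (Ih u s - Ih v s))) by ring end.
    eapply Rle_trans; [apply Rabs_triang|]. rewrite !Rabs_Ropp, Rabs_mult, (Rabs_right mh) by lra.
    assert (Cvh * Rabs (cl K (Iv u r) * cl K (Sh u r) - cl K (Iv v r) * cl K (Sh v r)) / nl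
       <= 2 * Cvh * K / nl * Dst u v r).
    { unfold Rdiv. replace (2 * Cvh * K * / nl * Dst u v r) with (Cvh * (K * (2 * Dst u v r)) * / nl) by ring.
      apply Rmult_le_compat_r; [left; apply Rinv_0_lt_compat; lra|]. apply Rmult_le_compat_l; lra. }
    assert (mh * Rabs (Ih u s - Ih v s) <= mh * Dst u v s) by (apply Rmult_le_compat_l; lra).
    assert (2 * Cvh * K / nl * Dst u v r <= Lf * Dst u v r) by (apply Rmult_le_compat_r; [apply Dst_pos|lra]).
    assert (mh * Dst u v s <= Lf * Dst u v s) by (apply Rmult_le_compat_r; lra).
    lra.
  - assert (H' := CP s _ _ _ _ (abs_le_Dst2 u v s) (abs_le_Dst3 u v s)).
    assert (H3 := abs_le_Dst3 u v s).
    match goal with |- Rabs (?b - ?A - ?C - (?b - ?D - ?E)) <= _ =>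
      replace (b - A - C - (b - D - E)) with (- (Chv * (cl K (Ih u s) * cl K (Sv u s) - cl K (Ih v s) * cl K (Sv v s)))
        + - (mv * (Sv u s - Sv v s))) by ring end.
    eapply Rle_trans; [apply Rabs_triang|]. rewrite !Rabs_Ropp, !Rabs_mult, (Rabs_right Chv), (Rabs_right mv) by lra.
    assert (Chv * Rabs (cl K (Ih u s) * cl K (Sv u s) - cl K (Ih v s) * cl K (Sv v s)) <= Chv * (K * (2 * Dst u v s)))
      by (apply Rmult_le_compat_l; lra).
    assert (mv * Rabs (Sv u s - Sv v s) <= mv * Dst u v s) by (apply Rmult_le_compat_l; lra).
    assert ((2 * Chv * K + mv) * Dst u v s <= Lf * Dst u v s) by (apply Rmult_le_compat_r; lra).
    lra.
  - assert (H' := CP s _ _ _ _ (abs_le_Dst2 u v s) (abs_le_Dst3 u v s)).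
    assert (H3 := abs_le_Dst4 u v s).
    match goal with |- Rabs (?A - ?C - (?D - ?E)) <= _ =>
      replace (A - C - (D - E)) with ((Chv * (cl K (Ih u s) * cl K (Sv u s) - cl K (Ih v s) * cl K (Sv v s)))
        + - (mv * (Iv u s - Iv v s))) by ring end.
    eapply Rle_trans; [apply Rabs_triang|]. rewrite !Rabs_Ropp, !Rabs_mult, (Rabs_right Chv), (Rabs_right mv) by lra.
    assert (Chv * Rabs (cl K (Ih u s) * cl K (Sv u s) - cl K (Ih v s) * cl K (Sv v s)) <= Chv * (K * (2 * Dst u v s)))
      by (apply Rmult_le_compat_l; lra).
    assert (mv * Rabs (Iv u s - Iv v s) <= mv * Dst u v s) by (apply Rmult_le_compat_l; lra).
    assert ((2 * Chv * K + mv) * Dst u v s <= Lf * Dst u v s) by (apply Rmult_le_compat_r; lra).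
    lra.
Qed.

Definition Pmap (u : traj) := mkTraj
  (fun t => pc i1 t + RInt (F1 u) 0 (Rmax 0 t))
  (fun t => pc i2 t + RInt (F2 u) 0 (Rmax 0 t))
  (fun t => pc i3 t + RInt (F3 u) 0 (Rmax 0 t))
  (fun t => pc i4 t + RInt (F4 u) 0 (Rmax 0 t)).

Lemma comp_Pmap_fun i u : comp i (Pmap u) = (fun t => pc i t + RInt (Fc i u) 0 (Rmax 0 t)).
Proof. destruct i; reflexivity. Qed.
Lemma comp_Pmap i u t : comp i (Pmap u) t = pc i t + RInt (Fc i u) 0 (Rmax 0 t).
Proof. rewrite comp_Pmap_fun. reflexivity. Qed.

Definition u0 := mkTraj (pc i1) (pc i2) (pc i3) (pc i4).
Lemma comp_u0_fun i : comp i u0 = pc i.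
Proof. destruct i; reflexivity. Qed.

Fixpoint it k := match k with O => u0 | S k => Pmap (it k) end.

Lemma Pmap_cont u : ccont u -> ccont (Pmap u).
Proof.
  intros Hu i z. rewrite comp_Pmap_fun. apply cp_plus; [apply pc_cont|].
  apply rint_cont. apply Fc_cont. exact Hu.
Qed.

Lemma it_cont k : ccont (it k).
Proof.
  induction k as [|k IH].
  - intros i z. simpl. rewrite comp_u0_fun. apply pc_cont.
  - simpl. apply Pmap_cont, IH.
Qed.

Lemma it_neg k i t : t <= 0 -> comp i (it k) t = pc i t.
Proof.
  intros Ht. destruct k as [|k].
  - simpl. rewrite comp_u0_fun. reflexivity.
  - simpl. rewrite comp_Pmap, Rmax_left by lra. rewrite rint_zero. ring.
Qed.

Definition B0 := bh + bv + Cvh * (K * K) / nl + Chv * (K * K) + (mh + mv) * P.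

Lemma quot_bound X r : 0 <= X <= K * K -> 0 <= Cvh * X / nn r <= Cvh * (K * K) / nl.
Proof.
  intros HX. assert (Hn := nn_low r).
  split.
  - apply Rmult_le_pos; [nra|left; apply Rinv_0_lt_compat, nn_pos].
  - unfold Rdiv. apply Rmult_le_compat; [nra|left; apply Rinv_0_lt_compat, nn_pos|nra|].
    apply Rinv_le_contravar; lra.
Qed.

Lemma clprod_range a b : 0 <= cl K a * cl K b <= K * K.
Proof.
  destruct M_facts as (_&_&_&_&_&_&_&_&_&_&_&_&_&HK).
  assert (H1 := cl_range K a ltac:(lra)). assert (H2 := cl_range K b ltac:(lra)). split; nra.
Qed.

Lemma B0_bound i s : Rabs (Fc i u0 s) <= B0.
Proof.
  destruct M_facts as (_&_&_&_&_&_&_&_&_&_&_&_&_&HK).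
  assert (Q := fun a b r => quot_bound _ r (clprod_range a b)).
  assert (KK : 0 <= Chv * (K * K)) by (apply Rmult_le_pos; nra).
  assert (Pb : forall j r, 0 <= pc j r <= P) by (intros; split; [apply pc_nonneg|apply HPb]).
  apply Rabs_le. destruct i; cbn [Fc]; unfold F1, F2, F3, F4, B0; cbn [u0 Sh Ih Sv Iv].
  - specialize (Q (pc i4 s) (pc i1 s) s). specialize (Pb i1 s). split; nra.
  - specialize (Q (pc i4 (s - tau)) (pc i1 (s - tau)) (s - tau)). specialize (Pb i2 s). split; nra.
  - assert (R := clprod_range (pc i2 s) (pc i3 s)). specialize (Pb i3 s).
    assert (0 <= Cvh * (K * K) / nl) by (apply Rmult_le_pos; [nra|left; apply Rinv_0_lt_compat; lra]).
    split; nra.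
  - assert (R := clprod_range (pc i2 s) (pc i3 s)). specialize (Pb i4 s).
    assert (0 <= Cvh * (K * K) / nl) by (apply Rmult_le_pos; [nra|left; apply Rinv_0_lt_compat; lra]).
    split; nra.
Qed.

Lemma B0_pos : 0 <= B0.
Proof. assert (H := B0_bound i1 0). assert (H0 := Rabs_pos (Fc i1 u0 0)). lra. Qed.

Definition cc := 16 * Lf.
Definition A := 4 * B0 / cc.

Lemma cc_pos : 0 < cc.
Proof. destruct Lf_facts as [L0 _]. unfold cc. lra. Qed.
Lemma A_pos : 0 <= A.
Proof. unfold A. apply Rmult_le_pos; [assert (H := B0_pos); lra|left; apply Rinv_0_lt_compat, cc_pos]. Qed.

Lemma exp_mono x y : x <= y -> exp x <= exp y.
Proof. intros H. destruct (Req_dec x y) as [->|Hne]; [lra|]. left. apply exp_increasing. lra. Qed.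

Lemma exp_ge1 s : 0 <= s -> 1 <= exp (cc * s).
Proof. intros Hs. rewrite <- exp_0. apply exp_mono. assert (H := cc_pos). nra. Qed.

Lemma rint_diff_bound i u v t M : ccont u -> ccont v -> 0 <= t ->
  (forall s, 0 <= s <= t -> Rabs (Fc i u s - Fc i v s) <= M * exp (cc * s)) ->
  Rabs (RInt (Fc i u) 0 t - RInt (Fc i v) 0 t) <= M * (exp (cc * t) - 1) / cc.
Proof.
  intros Hu Hv Ht Hb.
  assert (E : RInt (Fc i u) 0 t - RInt (Fc i v) 0 t = RInt (fun s => Fc i u s - Fc i v s) 0 t).
  { rewrite (RInt_minus (V := R_CompleteNormedModule)); [reflexivity| |]; apply rint_ex; apply Fc_cont; assumption. }
  rewrite E. apply rint_bound; [|exact Ht|apply cc_pos|exact Hb].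
  intros s. apply cp_minus; apply Fc_cont; assumption.
Qed.

Lemma Ae_pos t : 0 <= A * exp (cc * t).
Proof. apply Rmult_le_pos; [apply A_pos|left; apply exp_pos]. Qed.

Lemma it_step k t : Dst (it (S k)) (it k) t <= A * exp (cc * t) * (/ 2) ^ k.
Proof.
  revert t. induction k as [|k IH]; intros t.
  - destruct (Rle_dec t 0) as [Ht|Ht].
    + rewrite Dst_comp, !it_neg by lra. rewrite !Rminus_eq_0, !Rabs_R0.
      assert (H := A_pos). assert (H' := exp_pos (cc * t)). simpl. nra.
    + assert (Hc : forall i, Rabs (comp i (it 1) t - comp i (it 0) t) <= B0 * (exp (cc * t) - 1) / cc).
      { intros i. simpl. rewrite comp_Pmap, comp_u0_fun, Rmax_right by lra.
        assert (EE : forall a b : R, a + b - a = b) by (intros; ring). rewrite EE.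
        apply rint_bound; [apply Fc_cont, it_cont with (k := O)|lra|apply cc_pos|].
        intros s Hs. eapply Rle_trans; [apply B0_bound|].
        assert (H1 := exp_ge1 s ltac:(lra)). assert (H2 := B0_pos). nra. }
      rewrite Dst_comp. assert (H1 := Hc i1). assert (H2 := Hc i2). assert (H3 := Hc i3). assert (H4 := Hc i4).
      simpl pow. unfold A.
      assert (Hcc := cc_pos). assert (HB := B0_pos).
      assert (E : 4 * (B0 * (exp (cc * t) - 1) / cc) <= 4 * B0 / cc * exp (cc * t) * 1).
      { unfold Rdiv. rewrite Rmult_1_r. 
        assert (0 <= B0 * / cc) by (apply Rmult_le_pos; [lra|left; apply Rinv_0_lt_compat; lra]).
        nra. }
      lra.
  - destruct (Rle_dec t 0) as [Ht|Ht].
    + rewrite Dst_comp, !it_neg by lra. rewrite !Rminus_eq_0, !Rabs_R0.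
      assert (H := Rmult_le_pos _ _ (Ae_pos t) (Rlt_le _ _ (half_pow_pos (S k)))). lra.
    + set (M := 2 * Lf * A * (/ 2) ^ k).
      assert (Hb : forall s, 0 <= s <= t -> forall i,
          Rabs (Fc i (it (S k)) s - Fc i (it k) s) <= M * exp (cc * s)).
      { intros s Hs i. eapply Rle_trans; [apply Fc_lip|].
        assert (I1 := IH s). assert (I2 := IH (s - tau)).
        assert (X : exp (cc * (s - tau)) <= exp (cc * s)) by (apply exp_mono; assert (H := cc_pos); nra).
        assert (HA := A_pos). assert (Hk := half_pow_pos k). destruct Lf_facts as [L0 _].
        assert (A * exp (cc * (s - tau)) * (/ 2) ^ k <= A * exp (cc * s) * (/ 2) ^ k).
        { apply Rmult_le_compat_r; [lra|]. apply Rmult_le_compat_l; lra. }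
        unfold M. 
        apply Rle_trans with (Lf * (A * exp (cc * s) * (/ 2) ^ k + A * exp (cc * s) * (/ 2) ^ k)).
        - apply Rmult_le_compat_l; lra.
        - right; ring. }
      assert (Hc : forall i, Rabs (comp i (it (S (S k))) t - comp i (it (S k)) t) <= M * (exp (cc * t) - 1) / cc).
      { intros i. change (it (S (S k))) with (Pmap (it (S k))). change (it (S k)) with (Pmap (it k)) at 2.
        rewrite !comp_Pmap, Rmax_right by lra.
        replace (pc i t + RInt (Fc i (it (S k))) 0 t - (pc i t + RInt (Fc i (it k)) 0 t))
          with (RInt (Fc i (it (S k))) 0 t - RInt (Fc i (it k)) 0 t) by ring.
        apply rint_diff_bound; [apply it_cont|apply it_cont|lra|]. intros s Hs. apply Hb, Hs. }
      rewrite Dst_comp. assert (H1 := Hc i1). assert (H2 := Hc i2). assert (H3 := Hc i3). assert (H4 := Hc i4).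
      assert (E : 4 * (M * (exp (cc * t) - 1) / cc) <= A * exp (cc * t) * (/ 2) ^ S k).
      { unfold M, cc. simpl pow. destruct Lf_facts as [L0 _]. assert (HA := A_pos). assert (Hk := half_pow_pos k).
        assert (He := exp_pos (16 * Lf * t)).
        replace (4 * (2 * Lf * A * (/ 2) ^ k * (exp (16 * Lf * t) - 1) / (16 * Lf)))
          with (A * (/ 2 * (/ 2) ^ k) * (exp (16 * Lf * t) - 1)) by (field; lra).
        assert (0 <= A * (/ 2 * (/ 2) ^ k)) by (apply Rmult_le_pos; lra).
        nra. }
      lra.
Qed.

Lemma step_comp_bound i k t : Rabs (comp i (it (S k)) t - comp i (it k) t) <= A * exp (cc * t) * (/ 2) ^ k.
Proof. eapply Rle_trans; [apply comp_le_Dst|apply it_step]. Qed.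


Definition ulim i t := proj1_sig (geom_limit (fun k => comp i (it k) t) (A * exp (cc * t)) (Ae_pos t)
   (fun k => step_comp_bound i k t)).

Definition usol := mkTraj (ulim i1) (ulim i2) (ulim i3) (ulim i4).

Lemma u_bound i k t : Rabs (comp i (it k) t - comp i usol t) <= 2 * A * exp (cc * t) * (/ 2) ^ k.
Proof.
  replace (2 * A * exp (cc * t) * (/ 2) ^ k) with (2 * (A * exp (cc * t)) * (/ 2) ^ k) by ring.
  destruct i; simpl; unfold ulim;
  match goal with |- context [proj1_sig ?X] => destruct X as [l Hl]; simpl; apply Hl end.
Qed.

Lemma u_cont : ccont usol.
Proof.
  intros i. apply (lim_cont (fun k => comp i (it k)) (comp i usol) (2 * A) cc).
  - assert (H := A_pos). lra.
  - apply cc_pos.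
  - intros k z. apply it_cont.
  - intros k t. apply u_bound.
Qed.

Lemma Dst_u k s : Dst (it k) usol s <= 8 * A * exp (cc * s) * (/ 2) ^ k.
Proof.
  rewrite Dst_comp. assert (H1 := u_bound i1 k s). assert (H2 := u_bound i2 k s).
  assert (H3 := u_bound i3 k s). assert (H4 := u_bound i4 k s). lra.
Qed.

Lemma u_fix i t : comp i usol t = pc i t + RInt (Fc i usol) 0 (Rmax 0 t).
Proof.
  set (t' := Rmax 0 t). assert (Ht' : 0 <= t') by apply Rmax_l.
  apply Rminus_diag_uniq. apply (geom_zero _ (A * exp (cc * t) + A * exp (cc * t'))).
  intros k.
  assert (E : comp i usol t - (pc i t + RInt (Fc i usol) 0 t') =
     - (comp i (it (S k)) t - comp i usol t) + (RInt (Fc i (it k)) 0 t' - RInt (Fc i usol) 0 t')).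
  { change (it (S k)) with (Pmap (it k)). rewrite comp_Pmap. fold t'. ring. }
  rewrite E. eapply Rle_trans; [apply Rabs_triang|]. rewrite Rabs_Ropp.
  assert (B1 := u_bound i (S k) t). simpl pow in B1.
  set (M := 16 * Lf * A * (/ 2) ^ k).
  assert (B2 : Rabs (RInt (Fc i (it k)) 0 t' - RInt (Fc i usol) 0 t') <= M * (exp (cc * t') - 1) / cc).
  { apply rint_diff_bound; [apply it_cont|apply u_cont|exact Ht'|].
    intros s Hs. eapply Rle_trans; [apply Fc_lip|].
    assert (I1 := Dst_u k s). assert (I2 := Dst_u k (s - tau)).
    assert (X : exp (cc * (s - tau)) <= exp (cc * s)) by (apply exp_mono; assert (H := cc_pos); nra).
    assert (HA := A_pos). assert (Hk := half_pow_pos k). destruct Lf_facts as [L0 _].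
    assert (8 * A * exp (cc * (s - tau)) * (/ 2) ^ k <= 8 * A * exp (cc * s) * (/ 2) ^ k).
    { apply Rmult_le_compat_r; [lra|]. apply Rmult_le_compat_l; lra. }
    unfold M.
    apply Rle_trans with (Lf * (8 * A * exp (cc * s) * (/ 2) ^ k + 8 * A * exp (cc * s) * (/ 2) ^ k)).
    - apply Rmult_le_compat_l; lra.
    - right; ring. }
  assert (E2 : M * (exp (cc * t') - 1) / cc <= A * exp (cc * t') * (/ 2) ^ k).
  { unfold M, cc. destruct Lf_facts as [L0 _]. assert (HA := A_pos). assert (Hk := half_pow_pos k).
    assert (He := exp_pos (16 * Lf * t')).
    replace (16 * Lf * A * (/ 2) ^ k * (exp (16 * Lf * t') - 1) / (16 * Lf))
      with (A * (/ 2) ^ k * (exp (16 * Lf * t') - 1)) by (field; lra).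
    assert (0 <= A * (/ 2) ^ k) by (apply Rmult_le_pos; lra). nra. }
  assert (E3 : 2 * A * exp (cc * t) * (/ 2 * (/ 2) ^ k) = A * exp (cc * t) * (/ 2) ^ k) by field.
  lra.
Qed.

Lemma u_neg i t : t <= 0 -> comp i usol t = pc i t.
Proof. intros Ht. rewrite u_fix, Rmax_left by lra. rewrite rint_zero. ring. Qed.

Lemma pc_pos i y : 0 <= y -> pc i y = pc i 0.
Proof. intros Hy. unfold pc, ext. rewrite !clamp_pos by lra. reflexivity. Qed.

Lemma u_deriv i t : 0 < t -> derivable_pt_lim (comp i usol) t (Fc i usol t).
Proof.
  intros Ht. apply is_derive_Reals.
  apply (is_derive_ext_loc (fun y => pc i 0 + RInt (Fc i usol) 0 y)).
  - exists (mkposreal t Ht). intros y Hy.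
    unfold ball in Hy; simpl in Hy; unfold AbsRing_ball, abs, minus, plus, opp in Hy; simpl in Hy.
    assert (0 <= y) by (unfold Rabs in Hy; destruct Rcase_abs in Hy; lra).
    rewrite u_fix, (pc_pos i y), Rmax_right by lra. reflexivity.
  - apply is_derive_Reals.
    replace (Fc i usol t) with (0 + Fc i usol t) by ring.
    apply (derivable_pt_lim_plus (fun _ => pc i 0) (fun y => RInt (Fc i usol) 0 y)).
    + apply derivable_pt_lim_const.
    + apply rint_deriv. apply Fc_cont, u_cont.
Qed.

Lemma u_cfrom i a : cont_on_from a (comp i usol).
Proof. apply cont_from_of_pt. apply u_cont. Qed.

Lemma N0_pc : pc i3 0 + pc i4 0 = N0 phi.
Proof. unfold pc, ext, N0. simpl. rewrite clamp_pos by lra. reflexivity. Qed.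

Lemma nn_pos_eq t : 0 <= t -> nn t = nf bv mv phi t.
Proof. intros Ht. unfold nn. rewrite (pc_pos i3), (pc_pos i4), N0_pc, Rmax_right by lra. ring. Qed.
Lemma nn_neg_eq t : t <= 0 -> nn t = pc i3 t + pc i4 t.
Proof. intros Ht. unfold nn. rewrite Rmax_left, nf_0 by lra. ring. Qed.

Lemma Q_nonneg a b r : 0 <= Cvh * (cl K a * cl K b) / nn r.
Proof.
  destruct M_facts as (_&_&_&_&_&_&_&_&_&_&_&_&_&HK).
  assert (H := clprod_range a b). apply Rmult_le_pos; [nra|left; apply Rinv_0_lt_compat, nn_pos].
Qed.

Lemma Sh_nonneg t : 0 <= t -> 0 <= Sh usol t.
Proof.
  intros Ht. apply (barrier_low (comp i1 usol) (Fc i1 usol) 0 0 t (u_cfrom i1 0)).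
  - intros x Hx. apply u_deriv, Hx.
  - rewrite u_neg by lra. apply pc_nonneg.
  - intros x _ Hx. cbn [comp Fc] in *. unfold F1. rewrite (cl_zero K (Sh usol x)) by lra.
    rewrite Rmult_0_r. unfold Rdiv. rewrite Rmult_0_r, Rmult_0_l. nra.
  - exact Ht.
Qed.

Lemma Ih_nonneg t : 0 <= t -> 0 <= Ih usol t.
Proof.
  intros Ht. apply (barrier_low (comp i2 usol) (Fc i2 usol) 0 0 t (u_cfrom i2 0)).
  - intros x Hx. apply u_deriv, Hx.
  - rewrite u_neg by lra. apply pc_nonneg.
  - intros x _ Hx. cbn [comp Fc] in *. unfold F2.
    assert (H := Q_nonneg (Iv usol (x - tau)) (Sh usol (x - tau)) (x - tau)). nra.
  - exact Ht.
Qed.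

Lemma Sv_nonneg t : 0 <= t -> 0 <= Sv usol t.
Proof.
  intros Ht. apply (barrier_low (comp i3 usol) (Fc i3 usol) 0 0 t (u_cfrom i3 0)).
  - intros x Hx. apply u_deriv, Hx.
  - rewrite u_neg by lra. apply pc_nonneg.
  - intros x _ Hx. cbn [comp Fc] in *. unfold F3. rewrite (cl_zero K (Sv usol x)) by lra.
    rewrite !Rmult_0_r. nra.
  - exact Ht.
Qed.

Lemma Iv_nonneg t : 0 <= t -> 0 <= Iv usol t.
Proof.
  intros Ht. apply (barrier_low (comp i4 usol) (Fc i4 usol) 0 0 t (u_cfrom i4 0)).
  - intros x Hx. apply u_deriv, Hx.
  - rewrite u_neg by lra. apply pc_nonneg.
  - intros x _ Hx. cbn [comp Fc] in *. unfold F4.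
    assert (H := clprod_range (Ih usol x) (Sv usol x)). nra.
  - exact Ht.
Qed.

Lemma u_Nv t : 0 <= t -> Sv usol t + Iv usol t = nf bv mv phi t.
Proof.
  intros Ht.
  set (w := fun y => Sv usol y + Iv usol y - nf bv mv phi y).
  assert (Hcw : cont_on_from 0 w).
  { apply cont_from_of_pt. intros z. unfold w. apply cp_minus; [apply cp_plus|apply nf_cont; lra].
    apply (u_cont i3). apply (u_cont i4). }
  assert (Hdw : forall y, 0 < y -> derivable_pt_lim w y (- mv * w y)).
  { intros y Hy.
    assert (H := derivable_pt_lim_minus _ _ _ _ _
      (derivable_pt_lim_plus _ _ _ _ _ (u_deriv i3 y Hy) (u_deriv i4 y Hy)) (nf_deriv bv mv Hmv phi y)).
    replace (- mv * w y) with (Fc i3 usol y + Fc i4 usol y - (bv - mv * nf bv mv phi y))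
      by (unfold w; cbn [Fc]; unfold F3, F4; ring).
    exact H. }
  assert (Hw0 : w 0 = 0).
  { unfold w. rewrite (u_neg i3), (u_neg i4) by lra. simpl comp. rewrite nf_0, <- N0_pc by lra. ring. }
  assert (0 <= w t).
  { apply (barrier_low w (fun s => - mv * w s) 0 0 t Hcw Hdw); [lra| |exact Ht]. intros s _ Hs. nra. }
  assert (w t <= 0).
  { apply (barrier_up w (fun s => - mv * w s) 0 0 t Hcw Hdw); [lra| |exact Ht]. intros s _ Hs. nra. }
  unfold w in *. lra.
Qed.

Lemma u_Nv_nn r : Sv usol r + Iv usol r = nn r.
Proof.
  destruct (Rle_dec r 0) as [Hr|Hr].
  - rewrite nn_neg_eq by lra. rewrite <- (u_neg i3 r), <- (u_neg i4 r) by lra. reflexivity.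
  - rewrite nn_pos_eq by lra. apply u_Nv. lra.
Qed.

Lemma u_nonneg_all i r : 0 <= comp i usol r.
Proof.
  destruct (Rle_dec r 0) as [Hr|Hr].
  - rewrite u_neg by lra. apply pc_nonneg.
  - destruct i; simpl; [apply Sh_nonneg|apply Ih_nonneg|apply Sv_nonneg|apply Iv_nonneg]; lra.
Qed.

Lemma Sh_le t : Sh usol t <= M1.
Proof.
  destruct M_facts as (F1p&F2p&F3p&P1&P2&P3&P4&P5&P6&P7&P8&P9&P10&HK).
  destruct (Rle_dec t 0) as [Ht|Ht].
  - change (Sh usol t) with (comp i1 usol t). rewrite u_neg by lra. specialize (HPb i1 t). lra.
  - apply (barrier_up (comp i1 usol) (Fc i1 usol) 0 M1 t (u_cfrom i1 0)).
    + intros x Hx. apply u_deriv, Hx.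
    + rewrite u_neg by lra. specialize (HPb i1 0). lra.
    + intros x _ Hx. cbn [comp Fc] in *. unfold F1.
      assert (H := Q_nonneg (Iv usol x) (Sh usol x) x).
      assert (mh * (bh / mh) = bh) by (field; lra).
      assert (mh * (bh / mh) <= mh * M1) by (apply Rmult_le_compat_l; lra). nra.
    + lra.
Qed.

Lemma Sv_le t : 0 <= t -> Sv usol t <= M2 /\ Iv usol t <= M2.
Proof.
  intros Ht. destruct M_facts as (F1p&F2p&F3p&P1&P2&P3&P4&P5&P6&P7&P8&P9&P10&HK).
  assert (E := u_Nv t Ht). assert (B := nf_bounds bv mv Hmv phi t Ht).
  assert (H3 := Sv_nonneg t Ht). assert (H4 := Iv_nonneg t Ht).
  unfold M2. lra.
Qed.

Lemma clIv_le r : cl K (Iv usol r) <= nn r.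
Proof.
  apply cl_le; [left; apply nn_pos|]. rewrite <- u_Nv_nn. assert (H := u_nonneg_all i3 r). cbn [comp] in H. lra.
Qed.

Lemma clSh_le r : cl K (Sh usol r) <= M1.
Proof. destruct M_facts as (F1p&_). apply cl_le; [lra|apply Sh_le]. Qed.

Lemma Q_le_M1 r : Cvh * (cl K (Iv usol r) * cl K (Sh usol r)) / nn r <= Cvh * M1.
Proof.
  destruct M_facts as (F1p&F2p&F3p&P1&P2&P3&P4&P5&P6&P7&P8&P9&P10&HK).
  assert (H1 := clIv_le r). assert (H2 := clSh_le r). assert (Hn := nn_pos r).
  assert (R1 := cl_range K (Iv usol r) ltac:(lra)). assert (R2 := cl_range K (Sh usol r) ltac:(lra)).
  apply (Rmult_le_reg_r (nn r)); [exact Hn|]. unfold Rdiv. rewrite Rmult_assoc, Rinv_l, Rmult_1_r by lra.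
  assert (cl K (Iv usol r) * cl K (Sh usol r) <= nn r * M1) by nra. nra.
Qed.

Lemma Ih_le t : Ih usol t <= M3.
Proof.
  destruct M_facts as (F1p&F2p&F3p&P1&P2&P3&P4&P5&P6&P7&P8&P9&P10&HK).
  destruct (Rle_dec t 0) as [Ht|Ht].
  - change (Ih usol t) with (comp i2 usol t). rewrite u_neg by lra. specialize (HPb i2 t). lra.
  - apply (barrier_up (comp i2 usol) (Fc i2 usol) 0 M3 t (u_cfrom i2 0)).
    + intros x Hx. apply u_deriv, Hx.
    + rewrite u_neg by lra. specialize (HPb i2 0). lra.
    + intros x _ Hx. cbn [comp Fc] in *. unfold F2.
      assert (H := Q_le_M1 (x - tau)).
      assert (mh * (Cvh * M1 / mh) = Cvh * M1) by (field; lra).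
      assert (mh * (Cvh * M1 / mh) <= mh * M3) by (apply Rmult_le_compat_l; lra). nra.
    + lra.
Qed.

Lemma u_le_K i r : comp i usol r <= K.
Proof.
  destruct M_facts as (F1p&F2p&F3p&P1&P2&P3&P4&P5&P6&P7&P8&P9&P10&HK).
  destruct (Rle_dec r 0) as [Hr|Hr].
  - rewrite u_neg by lra. specialize (HPb i r). lra.
  - destruct i; cbn [comp].
    + assert (H := Sh_le r). lra.
    + assert (H := Ih_le r). lra.
    + destruct (Sv_le r ltac:(lra)). lra.
    + destruct (Sv_le r ltac:(lra)). lra.
Qed.

Lemma cl_u i r : cl K (comp i usol r) = comp i usol r.
Proof. apply cl_id. split; [apply u_nonneg_all|apply u_le_K]. Qed.

Lemma F_G s :
  Fc i1 usol s = bh - Cvh * (Iv usol s / (Sv usol s + Iv usol s)) * Sh usol s - mh * Sh usol s /\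
  Fc i2 usol s = Cvh * (Iv usol (s - tau) / (Sv usol (s - tau) + Iv usol (s - tau))) * Sh usol (s - tau)
        - mh * Ih usol s /\
  Fc i3 usol s = bv - Chv * Ih usol s * Sv usol s - mv * Sv usol s /\
  Fc i4 usol s = Chv * Ih usol s * Sv usol s - mv * Iv usol s.
Proof.
  assert (C1 : forall r, cl K (Sh usol r) = Sh usol r) by exact (fun r => cl_u i1 r).
  assert (C2 : forall r, cl K (Ih usol r) = Ih usol r) by exact (fun r => cl_u i2 r).
  assert (C3 : forall r, cl K (Sv usol r) = Sv usol r) by exact (fun r => cl_u i3 r).
  assert (C4 : forall r, cl K (Iv usol r) = Iv usol r) by exact (fun r => cl_u i4 r).
  change (Fc i1 usol s) with (F1 usol s). change (Fc i2 usol s) with (F2 usol s).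
  change (Fc i3 usol s) with (F3 usol s). change (Fc i4 usol s) with (F4 usol s). unfold F1, F2, F3, F4. rewrite !C1, !C2, !C3, !C4, !u_Nv_nn.
  assert (H1 := nn_pos s). assert (H2 := nn_pos (s - tau)).
  repeat split; field; lra.
Qed.

Lemma usol_sol : is_solution bh bv mh mv Cvh Chv tau phi usol.
Proof.
  split; [|split; [|split; [|split; [|split; [|split]]]]].
  - intros th Hth. assert (E : forall i, comp i usol th = comp i phi th).
    { intros i. rewrite u_neg by lra. unfold pc, ext. rewrite clamp_id by lra. reflexivity. }
    exact (conj (E i1) (conj (E i2) (conj (E i3) (E i4)))).
  - apply (u_cfrom i1).
  - apply (u_cfrom i2).
  - apply (u_cfrom i3).
  - apply (u_cfrom i4).
  - intros t _. rewrite u_Nv_nn. apply Rgt_not_eq, nn_pos.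
  - intros t Ht. destruct (F_G t) as (E1&E2&E3&E4).
    rewrite <- E1, <- E2, <- E3, <- E4.
    exact (conj (u_deriv i1 t Ht) (conj (u_deriv i2 t Ht) (conj (u_deriv i3 t Ht) (u_deriv i4 t Ht)))).
Qed.

Lemma Q_le_gen r B : 0 <= B -> Sh usol r <= B -> Cvh * (cl K (Iv usol r) * cl K (Sh usol r)) / nn r <= Cvh * B.
Proof.
  intros HB HSh.
  destruct M_facts as (F1p&F2p&F3p&P1&P2&P3&P4&P5&P6&P7&P8&P9&P10&HK).
  assert (H1 := clIv_le r). assert (H2 : cl K (Sh usol r) <= B) by (apply cl_le; lra). assert (Hn := nn_pos r).
  assert (R1 := cl_range K (Iv usol r) ltac:(lra)). assert (R2 := cl_range K (Sh usol r) ltac:(lra)).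
  apply (Rmult_le_reg_r (nn r)); [exact Hn|]. unfold Rdiv. rewrite Rmult_assoc, Rinv_l, Rmult_1_r by lra.
  assert (cl K (Iv usol r) * cl K (Sh usol r) <= nn r * B) by nra. nra.
Qed.

Lemma weight_cont f m : (forall z, continuity_pt f z) -> forall k a, cont_on_from a (fun y => (f y - k) * exp (m * y)).
Proof.
  intros Hf k a. apply cont_from_of_pt. intros z. apply cp_mult; [apply cp_minus; [apply Hf|apply cp_const]|].
  apply (cp_comp (fun y => m * y) exp); [cont|apply cp_exp].
Qed.

Lemma Sh_ult t : K / mh <= t -> Sh usol t <= bh / mh + 1.
Proof.
  intros Ht. destruct M_facts as (F1p&F2p&F3p&P1&P2&P3&P4&P5&P6&P7&P8&P9&P10&HK).
  assert (HKm : 0 <= K / mh) by (apply Rmult_le_pos; [lra|left; apply Rinv_0_lt_compat; lra]).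
  set (w := fun y => (Sh usol y - bh / mh) * exp (mh * y)).
  assert (Hw : w t <= w 0).
  { apply (mono_from w (fun y => (F1 usol y + mh * (Sh usol y - bh / mh)) * exp (mh * y)) 0 0 t).
    - apply weight_cont. exact (u_cont i1).
    - intros x Hx. apply weight_deriv. exact (u_deriv i1 x Hx).
    - intros x Hx. unfold F1. assert (H := Q_nonneg (Iv usol x) (Sh usol x) x).
      assert (He := exp_pos (mh * x)). assert (Hnx := nn_pos x).
      replace (bh - Cvh * (cl K (Iv usol x) * cl K (Sh usol x)) / nn x - mh * Sh usol x + mh * (Sh usol x - bh / mh))
        with (- (Cvh * (cl K (Iv usol x) * cl K (Sh usol x)) / nn x)) by (field; lra). nra.
    - lra. }
  unfold w in Hw. rewrite Rmult_0_r, exp_0, Rmult_1_r in Hw.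
  assert (H0 := u_le_K i1 0). cbn [comp] in H0.
  assert (Hb : 0 <= bh / mh) by (apply Rmult_le_pos; [lra|left; apply Rinv_0_lt_compat; lra]).
  assert (HE := exp_big mh t K Hmh ltac:(lra) Ht).
  destruct (Rle_dec (Sh usol t) (bh / mh + 1)) as [ok|Hn]; [exact ok|exfalso].
  assert (1 < Sh usol t - bh / mh) by lra. nra.
Qed.

Lemma Nv_ult t : K / mv <= t -> Sv usol t <= bv / mv + 1 /\ Iv usol t <= bv / mv + 1.
Proof.
  intros Ht. destruct M_facts as (F1p&F2p&F3p&P1&P2&P3&P4&P5&P6&P7&P8&P9&P10&HK).
  assert (HKm : 0 <= K / mv) by (apply Rmult_le_pos; [lra|left; apply Rinv_0_lt_compat; lra]).
  assert (Ht0 : 0 <= t) by lra.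
  assert (E := u_Nv t Ht0). assert (H3 := Sv_nonneg t Ht0). assert (H4 := Iv_nonneg t Ht0).
  assert (Hnf : (nf bv mv phi t - bv / mv) * exp (mv * t) = N0 phi - bv / mv).
  { unfold nf. replace (bv / mv + (N0 phi - bv / mv) * exp (- mv * t) - bv / mv) with
      ((N0 phi - bv / mv) * exp (- mv * t)) by ring.
    rewrite Rmult_assoc, <- exp_plus. replace (- mv * t + mv * t) with 0 by ring. rewrite exp_0. ring. }
  assert (HE := exp_big mv t K Hmv ltac:(lra) Ht).
  assert (Hbv2 : 0 <= bv / mv) by (apply Rmult_le_pos; [lra|left; apply Rinv_0_lt_compat; lra]).
  assert (nf bv mv phi t <= bv / mv + 1).
  { destruct (Rle_dec (nf bv mv phi t) (bv / mv + 1)) as [ok|Hn]; [exact ok|exfalso].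
    assert (1 < nf bv mv phi t - bv / mv) by lra. nra. }
  lra.
Qed.

Lemma Ih_ult t : K / mh + tau + K / mh <= t -> Ih usol t <= Cvh * (bh / mh + 1) / mh + 1.
Proof.
  intros Ht. destruct M_facts as (F1p&F2p&F3p&P1&P2&P3&P4&P5&P6&P7&P8&P9&P10&HK).
  assert (HKm : 0 <= K / mh) by (apply Rmult_le_pos; [lra|left; apply Rinv_0_lt_compat; lra]).
  assert (Hb : 0 <= bh / mh) by (apply Rmult_le_pos; [lra|left; apply Rinv_0_lt_compat; lra]).
  set (Sb := bh / mh + 1). set (q := Cvh * Sb / mh).
  assert (Hq : 0 <= q) by (unfold q, Sb; apply Rmult_le_pos; [nra|left; apply Rinv_0_lt_compat; lra]).
  set (T2 := K / mh + tau).
  set (w := fun y => (Ih usol y - q) * exp (mh * y)).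
  assert (Hw : w t <= w T2).
  { apply (mono_from w (fun y => (F2 usol y + mh * (Ih usol y - q)) * exp (mh * y)) 0 T2 t).
    - apply weight_cont. exact (u_cont i2).
    - intros x Hx. apply weight_deriv. exact (u_deriv i2 x Hx).
    - intros x Hx. unfold F2.
      assert (H := Q_le_gen (x - tau) Sb ltac:(unfold Sb; lra) (Sh_ult (x - tau) ltac:(unfold T2 in Hx; lra))).
      assert (He := exp_pos (mh * x)).
      assert (mh * q = Cvh * Sb) by (unfold q; field; lra). nra.
    - unfold T2; lra. }
  unfold w in Hw.
  assert (HIT := u_le_K i2 T2). cbn [comp] in HIT.
  assert (HE2 := exp_pos (mh * T2)).
  assert (Hw2 : (Ih usol t - q) * exp (mh * (t - T2)) <= K).
  { assert (E : exp (mh * t) = exp (mh * (t - T2)) * exp (mh * T2)).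
    { rewrite <- exp_plus. f_equal. ring. }
    rewrite E in Hw. assert ((Ih usol T2 - q) * exp (mh * T2) <= K * exp (mh * T2)) by nra.
    assert (Hp := exp_pos (mh * (t - T2))).
    apply (Rmult_le_reg_r (exp (mh * T2))); [exact HE2|]. nra. }
  assert (HE := exp_big mh (t - T2) K Hmh ltac:(lra) ltac:(unfold T2 in *; lra)).
  destruct (Rle_dec (Ih usol t) (q + 1)) as [ok|Hn].
  - unfold q, Sb in ok. exact ok.
  - exfalso. assert (1 < Ih usol t - q) by lra. nra.
Qed.

Definition Bu := bh / mh + bv / mv + Cvh * (bh / mh + 1) / mh + 2.

Lemma u_ult : exists T, 0 <= T /\ forall t, T <= t ->
  Rabs (Sh usol t) <= Bu /\ Rabs (Ih usol t) <= Bu /\ Rabs (Sv usol t) <= Bu /\ Rabs (Iv usol t) <= Bu.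
Proof.
  destruct M_facts as (F1p&F2p&F3p&P1&P2&P3&P4&P5&P6&P7&P8&P9&P10&HK).
  assert (HKm : 0 <= K / mh) by (apply Rmult_le_pos; [lra|left; apply Rinv_0_lt_compat; lra]).
  assert (HKv : 0 <= K / mv) by (apply Rmult_le_pos; [lra|left; apply Rinv_0_lt_compat; lra]).
  assert (Hb : 0 <= bh / mh) by (apply Rmult_le_pos; [lra|left; apply Rinv_0_lt_compat; lra]).
  assert (Hbv2 : 0 <= bv / mv) by (apply Rmult_le_pos; [lra|left; apply Rinv_0_lt_compat; lra]).
  assert (Hq : 0 <= Cvh * (bh / mh + 1) / mh) by (apply Rmult_le_pos; [nra|left; apply Rinv_0_lt_compat; lra]).
  exists (K / mh + tau + K / mh + K / mv). split; [lra|]. intros t Ht.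
  assert (Ht0 : 0 <= t) by lra.
  assert (N1 := u_nonneg_all i1 t). assert (N2 := u_nonneg_all i2 t).
  assert (N3 := u_nonneg_all i3 t). assert (N4 := u_nonneg_all i4 t). cbn [comp] in N1, N2, N3, N4.
  assert (U1 := Sh_ult t ltac:(lra)). assert (U2 := Ih_ult t ltac:(lra)). destruct (Nv_ult t ltac:(lra)) as [U3 U4].
  unfold Bu. rewrite !Rabs_right by lra. repeat split; lra.
Qed.

End Cons.

Lemma P_exists tau phi : 0 <= tau -> in_Cplus tau phi -> exists P, 0 < P /\ forall i t, pc tau phi i t <= P.
Proof.
  intros Htau Hphi.
  assert (Mx : forall i, exists m, forall t, pc tau phi i t <= pc tau phi i m).
  { intros i.
    destruct (continuity_ab_maj (pc tau phi i) (- tau) 0 ltac:(lra)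
      (fun c _ => pc_cont tau Htau phi Hphi i c)) as [m [Hm Hmr]].
    exists m. intros t. 
    assert (E : pc tau phi i t = pc tau phi i (Rmax (- tau) (Rmin 0 t))).
    { unfold pc, ext. rewrite (clamp_id tau (Rmax (- tau) (Rmin 0 t))); [reflexivity|].
      apply (clamp_in tau Htau). }
    rewrite E. apply Hm. apply (clamp_in tau Htau). }
  destruct (Mx i1) as [m1 H1]. destruct (Mx i2) as [m2 H2].
  destruct (Mx i3) as [m3 H3]. destruct (Mx i4) as [m4 H4].
  exists (Rabs (pc tau phi i1 m1) + Rabs (pc tau phi i2 m2) + Rabs (pc tau phi i3 m3) + Rabs (pc tau phi i4 m4) + 1).
  assert (A1 := Rabs_pos (pc tau phi i1 m1)). assert (A2 := Rabs_pos (pc tau phi i2 m2)).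
  assert (A3 := Rabs_pos (pc tau phi i3 m3)). assert (A4 := Rabs_pos (pc tau phi i4 m4)).
  assert (B1 := Rle_abs (pc tau phi i1 m1)). assert (B2 := Rle_abs (pc tau phi i2 m2)).
  assert (B3 := Rle_abs (pc tau phi i3 m3)). assert (B4 := Rle_abs (pc tau phi i4 m4)).
  split; [lra|]. intros i t. destruct i.
  - specialize (H1 t). lra. - specialize (H2 t). lra. - specialize (H3 t). lra. - specialize (H4 t). lra.
Qed.

Theorem theorem1 (bh bv mh mv Cvh Chv tau : R)
  (Hbh : 0 < bh) (Hbv : 0 < bv) (Hmh : 0 < mh) (Hmv : 0 < mv)
  (HCvh : 0 < Cvh) (HChv : 0 < Chv) (Htau : 0 <= tau) :
  (forall phi : traj, in_Cplus tau phi ->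
     (* existence on [0, +oo) *)
     (exists x : traj, is_solution bh bv mh mv Cvh Chv tau phi x) /\
     (* uniqueness *)
     (forall x y : traj,
        is_solution bh bv mh mv Cvh Chv tau phi x ->
        is_solution bh bv mh mv Cvh Chv tau phi y ->
        forall t, - tau <= t ->
          Sh x t = Sh y t /\ Ih x t = Ih y t /\ Sv x t = Sv y t /\ Iv x t = Iv y t) /\
     (* nonnegativity *)
     (forall x : traj, is_solution bh bv mh mv Cvh Chv tau phi x ->
        forall t, 0 <= t ->
          0 <= Sh x t /\ 0 <= Ih x t /\ 0 <= Sv x t /\ 0 <= Iv x t)) /\
  (* ultimate boundedness: a bound B, uniform in the initial data *)
  (exists B : R, 0 < B /\
     forall phi : traj, in_Cplus tau phi ->
     forall x : traj, is_solution bh bv mh mv Cvh Chv tau phi x ->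
     exists T : R, 0 <= T /\ forall t, T <= t ->
       Rabs (Sh x t) <= B /\ Rabs (Ih x t) <= B /\
       Rabs (Sv x t) <= B /\ Rabs (Iv x t) <= B).
Proof.
  split.
  - intros phi Hphi.
    destruct (Nphi_lower bv mv tau Hbv Hmv Htau phi Hphi) as [nl [Hnl [Hl1 Hl2]]].
    destruct (P_exists tau phi Htau Hphi) as [P [HP HPb]].
    assert (Hu := usol_sol bh bv mh mv Cvh Chv tau Hbh Hbv Hmh Hmv HCvh HChv Htau phi Hphi P nl HP Hnl Hl1 Hl2 HPb).
    set (u := usol bh bv mh mv Cvh Chv tau Hbh Hbv Hmh Hmv HCvh HChv Htau phi Hphi P nl HP Hnl Hl1 Hl2 HPb) in *.
    split; [exists u; exact Hu|split].
    + intros x y Hx Hy t Ht.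
      exact (uniq bh bv mh mv Cvh Chv tau Hbv Hmh Hmv HCvh HChv Htau phi Hphi x y Hx Hy t Ht).
    + intros x Hx t Ht.
      destruct (uniq bh bv mh mv Cvh Chv tau Hbv Hmh Hmv HCvh HChv Htau phi Hphi x u Hx Hu t ltac:(lra))
        as (E1&E2&E3&E4).
      rewrite E1, E2, E3, E4.
      exact (conj (u_nonneg_all bh bv mh mv Cvh Chv tau Hbh Hbv Hmh Hmv HCvh HChv Htau phi Hphi P nl HP Hnl Hl1 Hl2 HPb i1 t)
            (conj (u_nonneg_all bh bv mh mv Cvh Chv tau Hbh Hbv Hmh Hmv HCvh HChv Htau phi Hphi P nl HP Hnl Hl1 Hl2 HPb i2 t)
            (conj (u_nonneg_all bh bv mh mv Cvh Chv tau Hbh Hbv Hmh Hmv HCvh HChv Htau phi Hphi P nl HP Hnl Hl1 Hl2 HPb i3 t)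
                  (u_nonneg_all bh bv mh mv Cvh Chv tau Hbh Hbv Hmh Hmv HCvh HChv Htau phi Hphi P nl HP Hnl Hl1 Hl2 HPb i4 t)))).
  - exists (Bu bh bv mh mv Cvh). split.
    + unfold Bu.
      assert (0 <= bh / mh) by (apply Rmult_le_pos; [lra|left; apply Rinv_0_lt_compat; lra]).
      assert (0 <= bv / mv) by (apply Rmult_le_pos; [lra|left; apply Rinv_0_lt_compat; lra]).
      assert (0 <= Cvh * (bh / mh + 1) / mh) by (apply Rmult_le_pos; [nra|left; apply Rinv_0_lt_compat; lra]).
      lra.
    + intros phi Hphi x Hx.
      destruct (Nphi_lower bv mv tau Hbv Hmv Htau phi Hphi) as [nl [Hnl [Hl1 Hl2]]].
      destruct (P_exists tau phi Htau Hphi) as [P [HP HPb]].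
      assert (Hu := usol_sol bh bv mh mv Cvh Chv tau Hbh Hbv Hmh Hmv HCvh HChv Htau phi Hphi P nl HP Hnl Hl1 Hl2 HPb).
      destruct (u_ult bh bv mh mv Cvh Chv tau Hbh Hbv Hmh Hmv HCvh HChv Htau phi Hphi P nl HP Hnl Hl1 Hl2 HPb)
        as [T [HT HTb]].
      exists T. split; [exact HT|]. intros t Ht.
      destruct (uniq bh bv mh mv Cvh Chv tau Hbv Hmh Hmv HCvh HChv Htau phi Hphi x _ Hx Hu t ltac:(lra))
        as (E1&E2&E3&E4).
      rewrite E1, E2, E3, E4. apply HTb, Ht.
Qed.
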